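(* On $[c,d]=[2,6]$ let $p(x)=1+x^3$ and $q(x)=\lfloor x\rfloor$ (integer part). Then the problem $$x^3V''(x)^2+p(x)x^2V''(x)+q(x)\big(xV'(x)-V(x)\big)=0\ \text{ a.e. on }[2,6],\qquad V(2)=9,\ V(6)=1,$$ has extremal convex solutions in the functional interval $\big[\max\{\tfrac{x}{6},\,6x^2-50x+85\},\ 13-2x\big]$.
   Context: A solution is a $V\in C^1([2,6])$ with $V'$ absolutely continuous satisfying the equation a.e. and the boundary conditions. For functions $a\le b$, $[a,b]$ denotes the set of functions $V$ with $a(x)\le V(x)\le b(x)$ for all $x$. ''Extremal convex solutions in $[a,b]$'' means: there exist convex solutions $V_*,V^*\in[a,b]$ such that every convex solution $V\in[a,b]$ satisfies $V_*\le V\le V^*$. *)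

(* Defs.v *)
From Stdlib Require Import Reals Lra.
Open Scope R_scope.

Fixpoint rsum (f : nat -> R) (n : nat) : R :=
  match n with O => 0 | S m => rsum f m + f m end.

Definition in_cc (a b x : R) : Prop := a <= x <= b.

(* D is the derivative of V at x relative to [a,b] (one-sided at endpoints) *)
Definition deriv_within (a b : R) (V : R -> R) (x l : R) : Prop :=
  forall eps, 0 < eps -> exists delta, 0 < delta /\
    forall y, in_cc a b y -> y <> x -> Rabs (y - x) < delta ->
      Rabs ((V y - V x) / (y - x) - l) < eps.

Definition continuous_on (a b : R) (f : R -> R) : Prop :=
  forall x, in_cc a b x -> forall eps, 0 < eps -> exists delta, 0 < delta /\
    forall y, in_cc a b y -> Rabs (y - x) < delta -> Rabs (f y - f x) < eps.

Definition C1_with_deriv (a b : R) (V D : R -> R) : Prop :=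
  (forall x, in_cc a b x -> deriv_within a b V x (D x)) /\ continuous_on a b D.

Definition abs_continuous_on (a b : R) (f : R -> R) : Prop :=
  forall eps, 0 < eps -> exists delta, 0 < delta /\
    forall (n : nat) (u v : nat -> R),
      (forall i, (i < n)%nat -> a <= u i /\ u i <= v i /\ v i <= b) ->
      (forall i j, (i < j < n)%nat -> v i <= u j) ->
      rsum (fun i => v i - u i) n < delta ->
      rsum (fun i => Rabs (f (v i) - f (u i))) n < eps.

Definition null_set (N : R -> Prop) : Prop :=
  forall eps, 0 < eps -> exists u v : nat -> R,
    (forall k, u k <= v k) /\
    (forall x, N x -> exists k, u k < x < v k) /\
    (forall n, rsum (fun k => v k - u k) n <= eps).

Definition ae_on (a b : R) (P : R -> Prop) : Prop :=
  exists N, null_set N /\ forall x, in_cc a b x -> ~ N x -> P x.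

Definition convex_on (a b : R) (V : R -> R) : Prop :=
  forall x y t, in_cc a b x -> in_cc a b y -> 0 <= t <= 1 ->
    V (t * x + (1 - t) * y) <= t * V x + (1 - t) * V y.

Definition p (x : R) : R := 1 + x ^ 3.
(* integer part: Int_part x = up x - 1 is the floor of x *)
Definition q (x : R) : R := IZR (Int_part x).

Definition is_solution (V : R -> R) : Prop :=
  exists D : R -> R,
    C1_with_deriv 2 6 V D /\ abs_continuous_on 2 6 D /\
    ae_on 2 6 (fun x => exists w, derivable_pt_lim D x w /\
       x ^ 3 * w ^ 2 + p x * x ^ 2 * w + q x * (x * D x - V x) = 0) /\
    V 2 = 9 /\ V 6 = 1.

Definition lower_fn (x : R) : R := Rmax (x / 6) (6 * x ^ 2 - 50 * x + 85).
Definition upper_fn (x : R) : R := 13 - 2 * x.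

Definition in_fun_interval (a b : R) (lo hi V : R -> R) : Prop :=
  forall x, in_cc a b x -> lo x <= V x /\ V x <= hi x.

Definition convex_solution_in (V : R -> R) : Prop :=
  is_solution V /\ convex_on 2 6 V /\ in_fun_interval 2 6 lower_fn upper_fn V.

(* Main.v *)
Require Import Defs.
From Stdlib Require Import Reals Lra Psatz List Classical ClassicalEpsilon.
From Coquelicot Require Import Coquelicot.
Open Scope R_scope.

Lemma abs_le_b x e : Rabs x <= e -> - e <= x <= e.
Proof. unfold Rabs; destruct (Rcase_abs x); intros; lra. Qed.
Lemma abs_lt_b x e : Rabs x < e -> - e < x < e.
Proof. unfold Rabs; destruct (Rcase_abs x); intros; lra. Qed.
Lemma abs_le_i x e : - e <= x <= e -> Rabs x <= e.
Proof. unfold Rabs; destruct (Rcase_abs x); intros; lra. Qed.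
Lemma abs_lt_i x e : - e < x < e -> Rabs x < e.
Proof. unfold Rabs; destruct (Rcase_abs x); intros; lra. Qed.
Lemma abs_ge_self x : x <= Rabs x /\ - x <= Rabs x.
Proof. unfold Rabs; destruct (Rcase_abs x); intros; lra. Qed.

Inductive fine (dl : R -> R) (a : R) : R -> list (R*R*R) -> Prop :=
| fine_nil : fine dl a a nil
| fine_cons : forall x z y l, fine dl a x l -> x <= z <= y -> z - x < dl z -> y - z < dl z ->
    fine dl a y ((x,z,y)::l).

Lemma fine_le dl a t l : fine dl a t l -> a <= t.
Proof. induction 1; lra. Qed.

Lemma cousin (dl : R -> R) (a b : R) : a <= b -> (forall z, a <= z <= b -> 0 < dl z) ->
  exists l, fine dl a b l.
Proof.
  intros hab hd.
  set (S := fun t => a <= t <= b /\ exists l, fine dl a t l).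
  assert (hb : bound S) by (exists b; intros t [[_ ?] _]; auto).
  assert (he : exists t, S t) by (exists a; split; [lra| exists nil; constructor]).
  destruct (completeness S hb he) as [s [hub hlub]].
  assert (has : a <= s) by (apply hub; split; [lra| exists nil; constructor]).
  assert (hsb : s <= b) by (apply hlub; intros t [[_ ?] _]; auto).
  assert (hds := hd s (conj has hsb)).
  assert (ht : exists t, S t /\ s - dl s < t).
  { apply NNPP; intro hn. assert (s <= s - dl s). apply hlub. intros t ht.
    apply Rnot_lt_le. intro. apply hn. exists t. auto. lra. }
  destruct ht as [t [[[hat htb] [l hl]] hts]].
  assert (hts2 : t <= s) by (apply hub; split; [lra| exists l; auto]).
  destruct (Rle_lt_or_eq_dec s b hsb) as [hlt | heq].
  - exfalso.
    destruct (Rle_dec b (s + dl s / 2)) as [h1|h1].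
    + assert (S b). { split. lra. exists ((t,s,b)::l). constructor; auto; lra. }
      assert (b <= s) by (apply hub; auto). lra.
    + assert (S (s + dl s / 2)). { split. lra. exists ((t,s,s + dl s / 2)::l). constructor; auto; lra. }
      assert (s + dl s / 2 <= s) by (apply hub; auto). lra.
  - subst. exists ((t,b,b)::l). constructor; auto; lra.
Qed.

Fixpoint desc (a : R) (l : list (R*R*R)) (t : R) : Prop :=
  match l with nil => a <= t | (x,z,y)::r => y <= t /\ x <= z <= y /\ desc a r x end.

Lemma fine_desc dl a t l : fine dl a t l -> desc a l t.
Proof. induction 1; simpl; auto; [lra|]. repeat split; auto; lra. Qed.

Lemma desc_le a l t : desc a l t -> a <= t.
Proof. revert t; induction l as [|[[x z] y] r IH]; simpl; intros t H; auto.
  destruct H as [h1 [h2 h3]]. apply IH in h3. lra. Qed.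

Lemma desc_mono a l t t' : desc a l t -> t <= t' -> desc a l t'.
Proof. destruct l as [|[[x z] y] r]; simpl; intros H1 H2; [lra|]. destruct H1 as [? [? ?]]. repeat split; auto; lra. Qed.

Lemma desc_bounds a l t : desc a l t -> forall x z y, In (x,z,y) l -> a <= x /\ x <= z <= y /\ y <= t.
Proof. revert t; induction l as [|[[x z] y] r IH]; simpl; intros t H x' z' y' Hin.
  - contradiction.
  - destruct H as [h1 [h2 h3]]. destruct Hin as [He|Hin].
    + inversion He; subst. apply desc_le in h3. lra.
    + destruct (IH x h3 x' z' y' Hin). lra. Qed.

Lemma desc_filterb (f : R*R*R -> bool) a l t : desc a l t -> desc a (filter f l) t.
Proof. revert t; induction l as [|[[x z] y] r IH]; simpl; intros t H; auto.
  destruct H as [h1 [h2 h3]]. destruct (f (x,z,y)); simpl.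
  - split; auto.
  - apply desc_mono with x; auto. lra. Qed.

Inductive filt (N : R -> Prop) : list (R*R*R) -> list (R*R*R) -> Prop :=
| filt_nil : filt N nil nil
| filt_keep : forall x z y l l', N z -> filt N l l' -> filt N ((x,z,y)::l) ((x,z,y)::l')
| filt_drop : forall x z y l l', ~ N z -> filt N l l' -> filt N ((x,z,y)::l) l'.

Lemma filt_ex N l : exists l', filt N l l'.
Proof. induction l as [|[[x z] y] r [l' IH]].
  - exists nil; constructor.
  - destruct (classic (N z)).
    + exists ((x,z,y)::l'); constructor; auto.
    + exists l'; constructor; auto. Qed.

Lemma filt_desc N l l' : filt N l l' -> forall a t, desc a l t -> desc a l' t.
Proof. induction 1; simpl; intros a t H'; auto.
  - destruct H' as [h1 [h2 h3]]. split; auto.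
  - destruct H' as [h1 [h2 h3]]. apply desc_mono with x; auto. lra. Qed.

Lemma filt_in N l l' : filt N l l' -> forall x z y, In (x,z,y) l' -> In (x,z,y) l /\ N z.
Proof. induction 1; simpl; intros x' z' y' Hin; try contradiction.
  - destruct Hin as [He|Hin]. inversion He; subst; auto.
    destruct (IHfilt _ _ _ Hin); auto.
  - destruct (IHfilt _ _ _ Hin); auto. Qed.

Fixpoint lsum (g : R*R*R -> R) (l : list (R*R*R)) : R :=
  match l with nil => 0 | e::r => g e + lsum g r end.

Definition sumlen l := lsum (fun e => snd e - fst (fst e)) l.
Definition sumabs (F : R -> R) l := lsum (fun e => Rabs (F (snd e) - F (fst (fst e)))) l.

Lemma rsum_ext f g n : (forall i, (i < n)%nat -> f i = g i) -> rsum f n = rsum g n.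
Proof. induction n; simpl; intros H; auto. rewrite IHn by (intros; apply H; lia). rewrite H by lia. auto. Qed.

Lemma rsum_list (g : R*R*R -> R) d0 l :
  rsum (fun i => g (nth (length l - 1 - i) l d0)) (length l) = lsum g l.
Proof. induction l as [|e r IH]; simpl; auto.
  rewrite (rsum_ext _ (fun i => g (nth (length r - 1 - i) r d0))).
  - rewrite IH. replace (length r - 0 - length r)%nat with 0%nat by lia. simpl. ring.
  - intros i hi. f_equal. replace (length r - 0 - i)%nat with (S (length r - 1 - i)) by lia. auto. Qed.

Lemma desc_order a l t : desc a l t -> forall d0 q p, (q < p < length l)%nat ->
  snd (nth p l d0) <= fst (fst (nth q l d0)).
Proof. revert t; induction l as [|[[x z] y] r IH]; simpl; intros t H d0 q p hqp; [lia|].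
  destruct H as [h1 [h2 h3]]. destruct q as [|q]; destruct p as [|p]; try lia.
  - simpl. destruct (nth p r d0) as [[x' z'] y'] eqn:E.
    assert (In (x',z',y') r). { rewrite <- E. apply nth_In. lia. }
    destruct (desc_bounds _ _ _ h3 _ _ _ H). simpl. lra.
  - simpl. apply (IH x h3). lia. Qed.

Lemma ac_list a b F : abs_continuous_on a b F -> forall eps, 0 < eps -> exists d, 0 < d /\
  forall l, desc a l b -> sumlen l < d -> sumabs F l < eps.
Proof. intros hac eps heps. destruct (hac eps heps) as [d [hd H]]. exists d; split; auto.
  intros l hl hs. set (d0 := (0,0,0)).
  set (n := length l).
  set (uu := fun i => fst (fst (nth (n - 1 - i) l d0))).
  set (vv := fun i => snd (nth (n - 1 - i) l d0)).
  specialize (H n uu vv).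
  unfold sumabs. rewrite <- (rsum_list _ d0). unfold sumlen in hs. rewrite <- (rsum_list _ d0) in hs.
  apply H.
  - intros i hi. unfold uu, vv. destruct (nth (n - 1 - i) l d0) as [[x z] y] eqn:E.
    assert (In (x,z,y) l). { rewrite <- E. apply nth_In. unfold n in *; lia. }
    destruct (desc_bounds _ _ _ hl _ _ _ H0). simpl. lra.
  - intros i j hij. unfold uu, vv. apply (desc_order _ _ _ hl). unfold n in *; lia.
  - exact hs.
Qed.

Lemma pack_one a U l : forall t V, desc a l t -> (forall x z y, In (x,z,y) l -> U <= x /\ y <= V) -> U <= V ->
  sumlen l <= V - U.
Proof. induction l as [|[[x z] y] r IH]; intros t V hd hin hUV; unfold sumlen; simpl.
  - lra.
  - destruct hd as [h1 [h2 h3]].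
    destruct (hin x z y (or_introl eq_refl)) as [hx hy].
    assert (sumlen r <= x - U).
    { apply (IH x x h3); [|lra]. intros x' z' y' Hi. split.
      - apply (hin x' z' y'); simpl; auto.
      - destruct (desc_bounds _ _ _ h3 _ _ _ Hi). lra. }
    unfold sumlen in H. simpl. lra. Qed.

Lemma lsum_filter g f l : lsum g l = lsum g (filter f l) + lsum g (filter (fun e => negb (f e)) l).
Proof. induction l as [|e r IH]; simpl; [lra|]. destruct (f e); simpl; lra. Qed.

Lemma pack (u v : nat -> R) (kf : R -> nat) (huv : forall k, u k <= v k) a K : forall l t, desc a l t ->
  (forall x z y, In (x,z,y) l -> (kf z < K)%nat /\ u (kf z) <= x /\ y <= v (kf z)) ->
  sumlen l <= rsum (fun k => v k - u k) K.
Proof. induction K; intros l t hd hin.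
  - destruct l as [|[[x z] y] r]. unfold sumlen; simpl; lra.
    destruct (hin x z y (or_introl eq_refl)). lia.
  - set (f := fun e : R*R*R => Nat.eqb (kf (snd (fst e))) K).
    unfold sumlen. rewrite (lsum_filter _ f). simpl.
    assert (H1 : sumlen (filter f l) <= v K - u K).
    { apply (pack_one a _ _ t); auto. apply desc_filterb; auto.
      intros x z y Hi. apply filter_In in Hi. destruct Hi as [Hi Hf]. unfold f in Hf; simpl in Hf.
      apply Nat.eqb_eq in Hf. destruct (hin x z y Hi) as [_ [? ?]]. rewrite Hf in *. lra. }
    assert (H2 : sumlen (filter (fun e => negb (f e)) l) <= rsum (fun k => v k - u k) K).
    { apply (IHK _ t). apply desc_filterb; auto.
      intros x z y Hi. apply filter_In in Hi. destruct Hi as [Hi Hf]. unfold f in Hf; simpl in Hf.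
      apply Bool.negb_true_iff in Hf. apply Nat.eqb_neq in Hf. destruct (hin x z y Hi) as [? [? ?]].
      repeat split; auto. lia. }
    unfold sumlen in H1, H2. lra. Qed.

Lemma deriv_approx a b F z w : deriv_within a b F z w -> forall eps, 0 < eps ->
  exists d, 0 < d /\ forall y, a <= y <= b -> Rabs (y - z) < d ->
    Rabs (F y - F z - w * (y - z)) <= eps * Rabs (y - z).
Proof. intros H eps he. destruct (H eps he) as [d [hd Hd]]. exists d; split; auto.
  intros y hy hyz. destruct (Req_dec y z) as [->|hne].
  - replace (F z - F z - w * (z - z)) with 0 by ring. rewrite Rabs_R0. apply Rmult_le_pos; [lra|apply Rabs_pos].
  - specialize (Hd y hy hne hyz).
    replace ((F y - F z) / (y - z) - w) with ((F y - F z - w * (y - z)) / (y - z)) in Hd by (field; lra).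
    unfold Rdiv in Hd; rewrite Rabs_mult, Rabs_inv in Hd.
    assert (0 < Rabs (y - z)) by (apply Rabs_pos_lt; lra).
    apply Rlt_le. apply (Rmult_lt_compat_r (Rabs (y - z))) in Hd; auto.
    unfold Rdiv in Hd. rewrite Rmult_assoc, Rinv_l in Hd by lra. lra. Qed.

Lemma choice2 (P : R -> R -> nat -> Prop) : (forall z, exists d k, P z d k) ->
  exists (dl : R -> R) (kf : R -> nat), forall z, P z (dl z) (kf z).
Proof. intros H.
  assert (H' : forall z, exists pr : R * nat, P z (fst pr) (snd pr)).
  { intros z. destruct (H z) as [d [k h]]. exists (d,k); auto. }
  exists (fun z => fst (proj1_sig (constructive_indefinite_description _ (H' z)))).
  exists (fun z => snd (proj1_sig (constructive_indefinite_description _ (H' z)))).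
  intros z. exact (proj2_sig (constructive_indefinite_description _ (H' z))). Qed.

Definition acN (a b : R) (F : R -> R) (N : R -> Prop) : Prop :=
  forall eps, 0 < eps -> exists d, 0 < d /\
    forall l, desc a l b -> (forall x z y, In (x,z,y) l -> N z) -> sumlen l < d -> sumabs F l < eps.

Lemma acN_of_ac a b F N : abs_continuous_on a b F -> acN a b F N.
Proof. intros H eps he. destruct (ac_list _ _ _ H eps he) as [d [hd Hd]]. exists d; split; auto. Qed.

Lemma acN_empty a b F : acN a b F (fun _ => False).
Proof. intros eps he. exists 1. split; [lra|]. intros l hl hN _.
  destruct l as [|[[x z] y] r]. unfold sumabs; simpl; lra. exfalso; apply (hN x z y); simpl; auto. Qed.

Lemma fine_inv (F : R -> R) (N : R -> Prop) dl a b eps : 0 <= eps ->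
  (forall z, a <= z <= b -> ~ N z -> exists w, 0 <= w /\ forall y, a <= y <= b -> Rabs (y - z) < dl z ->
    Rabs (F y - F z - w * (y - z)) <= eps * Rabs (y - z)) ->
  forall t l, fine dl a t l -> t <= b -> forall l', filt N l l' ->
    F t - F a >= - eps * (t - a) - sumabs F l'.
Proof. intros he hg t l hf. induction hf; intros htb l' hfl.
  - inversion hfl; subst. unfold sumabs; simpl; lra.
  - assert (hax := fine_le _ _ _ _ hf).
    inversion hfl as [|x1 z1 y1 l1 l1' hN hf1|x1 z1 y1 l1 l1' hN hf1]; subst.
    + specialize (IHhf ltac:(lra) _ hf1). unfold sumabs in *; simpl.
      assert (- Rabs (F y - F x) <= F y - F x) by (pose proof (abs_ge_self (F y - F x)); lra).
      nra.
    + specialize (IHhf ltac:(lra) _ hf1).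
      destruct (hg z ltac:(lra) hN) as [w [hw Hw]].
      assert (h1 := Hw y ltac:(lra) ltac:(rewrite (Rabs_right (y - z)); lra)).
      assert (h2 := Hw x ltac:(lra) ltac:(rewrite (Rabs_left1 (x - z)); lra)).
      rewrite (Rabs_right (y - z)) in h1 by lra. rewrite (Rabs_left1 (x - z)) in h2 by lra.
      apply abs_le_b in h1. apply abs_le_b in h2.
      assert (w*(y-z) >= 0) by nra. assert (w*(z-x) >= 0) by nra. unfold sumabs in *. lra.
Qed.

Lemma fine_in dl a t l : fine dl a t l -> forall x z y, In (x,z,y) l ->
  x <= z <= y /\ z - x < dl z /\ y - z < dl z /\ a <= x /\ y <= t.
Proof. induction 1; simpl; intros x' z' y' Hin; try contradiction.
  assert (hax := fine_le _ _ _ _ H).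
  destruct Hin as [He|Hin].
  - inversion He; subst. repeat split; lra.
  - destruct (IHfine _ _ _ Hin) as [? [? [? [? ?]]]]. repeat split; lra. Qed.

Lemma L1 (a b : R) (F : R -> R) (N : R -> Prop) :
  a <= b -> null_set N -> acN a b F N ->
  (forall x, a <= x <= b -> ~ N x -> exists w, 0 <= w /\ deriv_within a b F x w) ->
  F a <= F b.
Proof.
  intros hab hN hac hd.
  apply Rnot_lt_le; intro hlt.
  set (eps := (F a - F b) / (2 * (b - a + 1))).
  assert (heps : 0 < eps). { unfold eps. apply Rdiv_lt_0_compat; lra. }
  assert (heps2 : eps * (b - a + 1) = (F a - F b) / 2). { unfold eps. field. lra. }
  destruct (hac eps heps) as [d [hdp hdd]].
  destruct (hN (d/2) ltac:(lra)) as [u [v [huv [hcov hsum]]]].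
  assert (Hch : forall z, exists dd k, a <= z <= b -> 0 < dd /\
      (N z -> u k <= z - dd /\ z + dd <= v k) /\
      (~ N z -> exists w, 0 <= w /\ forall y, a <= y <= b -> Rabs (y - z) < dd ->
           Rabs (F y - F z - w * (y - z)) <= eps * Rabs (y - z))).
  { intros z. destruct (classic (a <= z <= b)) as [hz|hz]; [| exists 1%R, 0%nat; intros; contradiction].
    destruct (classic (N z)) as [hn|hn].
    - destruct (hcov z hn) as [k hk]. exists (Rmin (z - u k) (v k - z)), k. intros _.
      split; [apply Rmin_glb_lt; lra|]. split; [|intros; contradiction].
      intros _. pose proof (Rmin_l (z - u k) (v k - z)). pose proof (Rmin_r (z - u k) (v k - z)). lra.
    - destruct (hd z hz hn) as [w [hw hder]]. destruct (deriv_approx _ _ _ _ _ hder eps heps) as [dd [hdd' Hdd]].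
      exists dd, 0%nat. intros _. split; auto. split; [intros; contradiction|]. intros _. exists w; split; auto. }
  destruct (choice2 _ Hch) as [dl [kf Hdl]].
  destruct (cousin dl a b hab) as [l hl]. { intros z hz. apply (Hdl z hz). }
  destruct (filt_ex N l) as [l' hl'].
  assert (H1 := fine_inv F N dl a b eps (Rlt_le _ _ heps)
     ltac:(intros z hz hn; apply (proj2 (proj2 (Hdl z hz)) hn)) b l hl (Rle_refl b) l' hl').
  assert (hdesc : desc a l' b) by (apply (filt_desc _ _ _ hl'); apply (fine_desc _ _ _ _ hl)).
  assert (hK : exists K, forall x z y, In (x,z,y) l' -> (kf z < K)%nat).
  { clear - l'. induction l' as [|[[x z] y] r [K IH]].
    - exists 0%nat. intros; contradiction.
    - exists (S (Nat.max K (kf z))). intros x' z' y' [He|Hi].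
      + inversion He; subst; lia.
      + specialize (IH _ _ _ Hi); lia. }
  destruct hK as [K hK].
  assert (hpack : sumlen l' <= rsum (fun k => v k - u k) K).
  { apply (pack u v kf huv a K l' b hdesc). intros x z y Hi.
    destruct (filt_in _ _ _ hl' _ _ _ Hi) as [Hi0 Hnz].
    destruct (fine_in _ _ _ _ hl _ _ _ Hi0) as [h1 [h2 [h3 [h4 h5]]]].
    destruct (Hdl z ltac:(lra)) as [_ [hN1 _]]. destruct (hN1 Hnz).
    split; [apply hK with x y; auto|]. lra. }
  assert (hs := hsum K).
  assert (hab2 : sumabs F l' < eps).
  { apply hdd; auto. intros x z y Hi. destruct (filt_in _ _ _ hl' _ _ _ Hi); auto. lra. }
  nra.
Qed.

Lemma ev2 k : Nat.even (2*k) = true.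
Proof. rewrite Nat.even_mul; auto. Qed.
Lemma ev2s k : Nat.even (S (2*k)) = false.
Proof. rewrite Nat.even_succ, Nat.odd_mul; auto. Qed.

Lemma null_union (N1 N2 : R -> Prop) : null_set N1 -> null_set N2 -> null_set (fun x => N1 x \/ N2 x).
Proof.
  intros h1 h2 eps he.
  destruct (h1 (eps/2) ltac:(lra)) as [u1 [v1 [hu1 [hc1 hs1]]]].
  destruct (h2 (eps/2) ltac:(lra)) as [u2 [v2 [hu2 [hc2 hs2]]]].
  exists (fun n => if Nat.even n then u1 (Nat.div2 n) else u2 (Nat.div2 n)).
  exists (fun n => if Nat.even n then v1 (Nat.div2 n) else v2 (Nat.div2 n)).
  split; [intros k; destruct (Nat.even k); auto|].
  split.
  - intros x [hx|hx].
    + destruct (hc1 x hx) as [k hk]. exists (2*k)%nat.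
      rewrite ev2, Nat.div2_double. auto.
    + destruct (hc2 x hx) as [k hk]. exists (S (2*k))%nat.
      rewrite ev2s, Nat.div2_succ_double. auto.
  - assert (hm : forall m, rsum (fun k => (if Nat.even k then v1 (Nat.div2 k) else v2 (Nat.div2 k)) -
        (if Nat.even k then u1 (Nat.div2 k) else u2 (Nat.div2 k))) (2*m) =
        rsum (fun k => v1 k - u1 k) m + rsum (fun k => v2 k - u2 k) m).
    { induction m. simpl; lra.
      replace (2 * S m)%nat with (S (S (2*m))) by lia.
      match goal with |- rsum ?f _ = _ => change (rsum f (S (S (2*m)))) with (rsum f (2*m) + f (2*m)%nat + f (S (2*m))) end.
      rewrite IHm. cbv beta.
      rewrite ev2s, ev2, Nat.div2_succ_double, Nat.div2_double. simpl. lra. }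
    assert (hmono : forall (f : nat -> R), (forall k, 0 <= f k) -> forall n m, (n <= m)%nat -> rsum f n <= rsum f m).
    { intros f hf n m hnm. induction hnm. lra. simpl. specialize (hf m). lra. }
    intros n. 
    match goal with |- rsum ?f n <= _ => assert (hp : forall k, 0 <= f k) end.
    { intros k; cbv beta; destruct (Nat.even k); [pose proof (hu1 (Nat.div2 k))|pose proof (hu2 (Nat.div2 k))]; lra. }
    eapply Rle_trans. apply (hmono _ hp n (2*n)%nat). lia.
    rewrite hm. specialize (hs1 n); specialize (hs2 n). lra.
Qed.

Lemma lip_cont f x K : 0 <= K -> (forall y, Rabs (f y - f x) <= K * Rabs (y - x)) -> continuous f x.
Proof. intros hK H. apply continuity_pt_filterlim.
  unfold continuity_pt, continue_in, limit1_in, limit_in; simpl; unfold R_dist.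
  intros eps he. exists (eps/(K+1)). split. apply Rdiv_lt_0_compat; lra.
  intros y [_ hy]. eapply Rle_lt_trans. apply H.
  apply Rle_lt_trans with (K * (eps / (K+1))). apply Rmult_le_compat_l; lra.
  apply Rlt_le_trans with ((K+1) * (eps/(K+1))). apply Rmult_lt_compat_r. apply Rdiv_lt_0_compat; lra. lra.
  right; field; lra. Qed.

Definition ct (t : R) : R := Rmax 2 (Rmin 6 t).
Definition cu (v : R) : R := Rmax (-30) (Rmin 0 v).

Lemma ct_bounds t : 2 <= ct t <= 6.
Proof. unfold ct, Rmax, Rmin. repeat destruct Rle_dec; lra. Qed.
Lemma ct_id t : 2 <= t <= 6 -> ct t = t.
Proof. unfold ct, Rmax, Rmin. repeat destruct Rle_dec; lra. Qed.
Lemma ct_lip t s : Rabs (ct s - ct t) <= Rabs (s - t).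
Proof. unfold ct, Rmax, Rmin. repeat destruct Rle_dec; apply abs_le_i; pose proof (abs_ge_self (s - t)); lra. Qed.
Lemma cu_bounds v : -30 <= cu v <= 0.
Proof. unfold cu, Rmax, Rmin. repeat destruct Rle_dec; lra. Qed.
Lemma cu_id v : -30 <= v <= 0 -> cu v = v.
Proof. unfold cu, Rmax, Rmin. repeat destruct Rle_dec; lra. Qed.
Lemma cu_lip v w : Rabs (cu w - cu v) <= Rabs (w - v).
Proof. unfold cu, Rmax, Rmin. repeat destruct Rle_dec; apply abs_le_i; pose proof (abs_ge_self (w - v)); lra. Qed.

Definition bb (x : R) : R := (1 + x^3) * x^2.
Definition Ga (x c : R) : R := (sqrt (bb x ^2 + 4 * x^3 * c) - bb x) / (2 * x^3).

Lemma bb_pos x : 2 <= x -> 36 <= bb x.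
Proof. intros. unfold bb. assert (4 <= x^2) by nra. assert (8 <= x^3) by (simpl; nra). nra. Qed.
Lemma x3_ge x : 2 <= x -> 8 <= x^3.
Proof. intros. assert (4 <= x^2) by nra. simpl; nra. Qed.

Lemma Ga_eq x c : 2 <= x -> 0 <= c -> x^3 * Ga x c ^ 2 + bb x * Ga x c = c.
Proof. intros hx hc. unfold Ga.
  assert (h3 := x3_ge x hx).
  assert (hs : sqrt (bb x ^2 + 4 * x^3 * c) ^ 2 = bb x ^2 + 4 * x^3 * c).
  { rewrite <- Rsqr_pow2. apply Rsqr_sqrt. pose proof (bb_pos x hx). nra. }
  set (s := sqrt (bb x ^2 + 4 * x^3 * c)) in *.
  replace (x ^ 3 * ((s - bb x) / (2 * x ^ 3)) ^ 2 + bb x * ((s - bb x) / (2 * x ^ 3))) with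
    ((s^2 - bb x ^ 2) / (4 * x^3)) by (field; lra).
  rewrite hs. field. lra. Qed.

Lemma Ga_nonneg x c : 2 <= x -> 0 <= c -> 0 <= Ga x c.
Proof. intros hx hc. unfold Ga. assert (h3 := x3_ge x hx). pose proof (bb_pos x hx).
  apply Rdiv_le_0_compat; [|lra]. assert (bb x <= sqrt (bb x ^ 2 + 4 * x ^ 3 * c)).
  { rewrite <- (sqrt_pow2 (bb x)) at 1 by lra. apply sqrt_le_1_alt. nra. } lra. Qed.

Lemma Ga_le x c : 2 <= x -> 0 <= c -> Ga x c <= c / bb x.
Proof. intros hx hc. pose proof (Ga_eq x c hx hc). pose proof (Ga_nonneg x c hx hc). pose proof (bb_pos x hx).
  apply Rmult_le_reg_r with (bb x); [lra|]. unfold Rdiv; rewrite Rmult_assoc, Rinv_l by lra.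
  assert (8 <= x^3) by (apply x3_ge; lra). nra. Qed.

Lemma Ga_lip x c1 c2 : 2 <= x -> 0 <= c1 -> 0 <= c2 -> Rabs (Ga x c1 - Ga x c2) <= Rabs (c1 - c2) / bb x.
Proof. intros hx h1 h2. pose proof (Ga_eq x c1 hx h1). pose proof (Ga_eq x c2 hx h2).
  pose proof (Ga_nonneg x c1 hx h1). pose proof (Ga_nonneg x c2 hx h2). pose proof (bb_pos x hx).
  assert (8 <= x^3) by (apply x3_ge; lra).
  set (G1 := Ga x c1) in *. set (G2 := Ga x c2) in *.
  assert (he : (G1 - G2) * (x^3 * (G1 + G2) + bb x) = c1 - c2) by nra.
  assert (hd : bb x <= x^3 * (G1 + G2) + bb x) by nra.
  apply Rmult_le_reg_r with (bb x); [lra|]. unfold Rdiv; rewrite Rmult_assoc, Rinv_l by lra. rewrite Rmult_1_r.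
  rewrite <- he. rewrite Rabs_mult. rewrite (Rabs_right (x ^ 3 * (G1 + G2) + bb x)) by lra.
  apply Rmult_le_compat_l; [apply Rabs_pos|lra]. Qed.

Definition hk (k t v : R) : R := ct t * Ga (ct t) (- k * cu v).

Lemma hk_nonneg k t v : 0 <= k -> 0 <= hk k t v.
Proof. intros hk0. unfold hk. pose proof (ct_bounds t). pose proof (cu_bounds v).
  apply Rmult_le_pos; [lra|]. apply Ga_nonneg; nra. Qed.

Lemma hk_le_gen k t v : 0 <= k -> hk k t v <= 30 * k / ((1 + ct t ^ 3) * ct t).
Proof. intros hk0. unfold hk. pose proof (ct_bounds t) as hc. pose proof (cu_bounds v).
  set (x := ct t) in *. assert (hG := Ga_le x (- k * cu v) ltac:(lra) ltac:(nra)).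
  unfold bb in hG. assert (8 <= x^3) by (apply x3_ge; lra).
  apply Rle_trans with (x * (- k * cu v / ((1 + x ^ 3) * x ^ 2))). apply Rmult_le_compat_l; lra.
  apply Rle_trans with (x * (30 * k / ((1 + x ^ 3) * x ^ 2))).
  apply Rmult_le_compat_l; [lra|]. unfold Rdiv. apply Rmult_le_compat_r. 
  apply Rlt_le, Rinv_0_lt_compat. nra. nra.
  right. field. split; nra. Qed.

Lemma hk_le9 k t v : 0 <= k <= 5 -> hk k t v <= 9.
Proof. intros hk0. eapply Rle_trans. apply hk_le_gen; lra. pose proof (ct_bounds t).
  set (x := ct t) in *. assert (8 <= x^3) by (apply x3_ge; lra).
  apply Rmult_le_reg_r with ((1 + x ^ 3) * x); [nra|]. unfold Rdiv; rewrite Rmult_assoc, Rinv_l by nra. nra. Qed.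

Lemma hk_le_piece k t v : 2 <= k <= 5 -> k <= t <= k + 1 -> hk k t v <= 30 / (1 + k^3).
Proof. intros hk0 ht. eapply Rle_trans. apply hk_le_gen; lra. rewrite ct_id by lra.
  assert (k^3 <= t^3). { apply pow_incr; lra. } assert (8 <= k^3) by nra.
  unfold Rdiv. apply Rmult_le_reg_r with ((1 + t ^ 3) * t * (1 + k^3)); [nra|].
  rewrite !Rmult_assoc. rewrite (Rmult_comm (/ _)). rewrite <- !Rmult_assoc.
  field_simplify; nra. Qed.

Lemma hk_lip k t v1 v2 : 2 <= k <= 5 -> k <= t <= k + 1 -> Rabs (hk k t v1 - hk k t v2) <= Rabs (v1 - v2) / 9.
Proof. intros hk0 ht. unfold hk. rewrite ct_id by lra.
  pose proof (cu_bounds v1). pose proof (cu_bounds v2).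
  assert (hL := Ga_lip t (- k * cu v1) (- k * cu v2) ltac:(lra) ltac:(nra) ltac:(nra)).
  rewrite <- Rmult_minus_distr_l. rewrite Rabs_mult, (Rabs_right t) by lra.
  replace (- k * cu v1 - - k * cu v2) with (k * (cu v2 - cu v1)) in hL by ring.
  rewrite Rabs_mult, (Rabs_right k) in hL by lra.
  assert (hc : Rabs (cu v2 - cu v1) <= Rabs (v1 - v2)) by (rewrite (Rabs_minus_sym (cu v2)); apply cu_lip).
  assert (hb := bb_pos t ltac:(lra)). assert (h3 := x3_ge t ltac:(lra)).
  apply Rle_trans with (t * (k * Rabs (v1 - v2) / bb t)).
  { apply Rmult_le_compat_l; [lra|]. eapply Rle_trans; [apply hL|]. unfold Rdiv.
    apply Rmult_le_compat_r. apply Rlt_le, Rinv_0_lt_compat; lra. apply Rmult_le_compat_l; lra. }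
  unfold bb. pose proof (Rabs_pos (v1 - v2)). set (A := Rabs (v1 - v2)) in *.
  apply Rle_trans with (t * (t * A / ((1 + t ^ 3) * t ^ 2))).
  { apply Rmult_le_compat_l; [lra|]. unfold Rdiv. apply Rmult_le_compat_r.
    apply Rlt_le, Rinv_0_lt_compat; nra. nra. }
  replace (t * (t * A / ((1 + t ^ 3) * t ^ 2))) with (A / (1 + t^3)) by (field; nra).
  unfold Rdiv. apply Rmult_le_compat_l; auto. apply Rinv_le_contravar; lra. Qed.

Lemma cplus (f g : R -> R) x : continuous f x -> continuous g x -> continuous (fun t => f t + g t) x.
Proof. intros. exact (continuous_plus f g x H H0). Qed.
Lemma cmult (f g : R -> R) x : continuous f x -> continuous g x -> continuous (fun t => f t * g t) x.
Proof. intros. exact (continuous_mult f g x H H0). Qed.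
Lemma copp (f : R -> R) x : continuous f x -> continuous (fun t => - f t) x.
Proof. intros. exact (continuous_opp f x H). Qed.
Lemma cminus (f g : R -> R) x : continuous f x -> continuous g x -> continuous (fun t => f t - g t) x.
Proof. intros. apply cplus; auto. apply copp; auto. Qed.
Lemma cconst (c x : R) : continuous (fun _ : R => c) x.
Proof. apply continuous_const. Qed.
Lemma cid (x : R) : continuous (fun t : R => t) x.
Proof. apply continuous_id. Qed.
Lemma cpow (f : R -> R) x n : continuous f x -> continuous (fun t => f t ^ n) x.
Proof. intros H. induction n; simpl. apply cconst. apply cmult; auto. Qed.
Lemma cinv (f : R -> R) x : continuous f x -> f x <> 0 -> continuous (fun t => / f t) x.
Proof. intros. apply continuous_Rinv_comp; auto. Qed.
Lemma cdiv (f g : R -> R) x : continuous f x -> continuous g x -> g x <> 0 -> continuous (fun t => f t / g t) x.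
Proof. intros. apply cmult; auto. apply cinv; auto. Qed.
Lemma csqrt (f : R -> R) x : continuous f x -> 0 <= f x -> continuous (fun t => sqrt (f t)) x.
Proof. intros H h. apply (continuous_comp f sqrt); auto.
  apply continuity_pt_filterlim. apply continuity_pt_sqrt; auto. Qed.
Lemma ccomp (f g : R -> R) x : continuous f x -> continuous g (f x) -> continuous (fun t => g (f t)) x.
Proof. intros. apply (continuous_comp f g); auto. Qed.

Lemma ct_cont x : continuous ct x.
Proof. apply (lip_cont _ _ 1); [lra|]. intros; rewrite Rmult_1_l; apply ct_lip. Qed.
Lemma cu_cont x : continuous cu x.
Proof. apply (lip_cont _ _ 1); [lra|]. intros; rewrite Rmult_1_l; apply cu_lip. Qed.

Lemma cbb t : continuous (fun s => (1 + ct s ^ 3) * ct s ^ 2) t.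
Proof. apply cmult. apply cplus. apply cconst. apply cpow, ct_cont. apply cpow, ct_cont. Qed.
Lemma cct3 t : continuous (fun s => 2 * ct s ^ 3) t.
Proof. apply cmult. apply cconst. apply cpow, ct_cont. Qed.

Lemma hk_cont k (f : R -> R) t : 0 <= k -> continuous f t -> continuous (fun s => hk k s (f s)) t.
Proof. intros hk0 hf. unfold hk, Ga, bb.
  pose proof (ct_bounds t). assert (h3 := x3_ge (ct t) ltac:(lra)).
  assert (hc : continuous (fun s => cu (f s)) t) by (apply ccomp; auto; apply cu_cont).
  pose proof (cu_bounds (f t)).
  apply cmult. apply ct_cont.
  apply cdiv; [| apply cct3 | lra].
  apply cminus; [| apply cbb].
  apply csqrt.
  - apply cplus. apply cpow, cbb. apply cmult. apply cmult. apply cconst. apply cpow, ct_cont.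
    apply cmult. apply cconst. exact hc.
  - assert (0 <= ((1 + ct t ^ 3) * ct t ^ 2) ^ 2) by (apply pow2_ge_0).
    assert (0 <= - k * cu (f t)) by nra.
    assert (0 <= 4 * ct t ^ 3 * (- k * cu (f t))) by (apply Rmult_le_pos; lra). lra.
Qed.

Lemma loc_of (x d : R) (P : R -> Prop) : 0 < d -> (forall y, Rabs (y - x) < d -> P y) -> locally x P.
Proof. intros hd H. exists (mkposreal d hd). intros y hy. apply H. exact hy. Qed.

Definition contR (f : R -> R) := forall x, continuous f x.

Lemma exR k f a b : 0 <= k -> contR f -> ex_RInt (fun t => hk k t (f t)) a b.
Proof. intros hk0 hf. apply (ex_RInt_continuous (V:=R_CompleteNormedModule)). intros z _. apply hk_cont; auto. Qed.

Lemma absRInt (g : R -> R) a b M : ex_RInt g a b -> (forall t, Rmin a b <= t <= Rmax a b -> Rabs (g t) <= M) ->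
  Rabs (RInt g a b) <= M * Rabs (b - a).
Proof. intros he H. destruct (Rle_dec a b) as [hab|hab].
  - rewrite (Rabs_right (b - a)) by lra. rewrite Rmult_comm. apply abs_RInt_le_const; auto.
    intros t ht. apply H. rewrite Rmin_left, Rmax_right; lra.
  - apply Rnot_le_lt in hab. rewrite <- opp_RInt_swap by (apply ex_RInt_swap; auto). unfold opp; simpl. rewrite Rabs_Ropp.
    rewrite (Rabs_left (b - a)) by lra. replace (- (b - a)) with (a - b) by ring. rewrite Rmult_comm.
    apply abs_RInt_le_const; [lra| apply ex_RInt_swap; auto|].
    intros t ht. apply H. rewrite Rmin_right, Rmax_left; lra. Qed.

Definition cl (k x : R) : R := Rmax k (Rmin (k+1) x).
Lemma cl_bounds k x : k <= cl k x <= k + 1.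
Proof. unfold cl, Rmax, Rmin. repeat destruct Rle_dec; lra. Qed.
Lemma cl_id k x : k <= x <= k + 1 -> cl k x = x.
Proof. unfold cl, Rmax, Rmin. repeat destruct Rle_dec; lra. Qed.
Lemma cl_low k x : x <= k -> cl k x = k.
Proof. unfold cl, Rmax, Rmin. repeat destruct Rle_dec; lra. Qed.
Lemma cl_high k x : k + 1 <= x -> cl k x = k + 1.
Proof. unfold cl, Rmax, Rmin. repeat destruct Rle_dec; lra. Qed.
Lemma cl_lip k x y : Rabs (cl k y - cl k x) <= Rabs (y - x).
Proof. unfold cl, Rmax, Rmin. repeat destruct Rle_dec; apply abs_le_i; pose proof (abs_ge_self (y - x)); lra. Qed.
Lemma cl_mono k x y : x <= y -> cl k x <= cl k y.
Proof. unfold cl, Rmax, Rmin. repeat destruct Rle_dec; lra. Qed.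

Definition Ip (f : R -> R) (k x : R) : R := RInt (fun t => hk k t (f t)) k (cl k x).

Lemma Ip_diff f k x y : 0 <= k -> contR f -> Ip f k y - Ip f k x = RInt (fun t => hk k t (f t)) (cl k x) (cl k y).
Proof. intros hk0 hf. unfold Ip. rewrite <- (RInt_Chasles _ k (cl k x) (cl k y)) by (apply exR; auto).
  unfold plus; simpl. ring. Qed.

Lemma Ip_bounds f k x : 2 <= k <= 5 -> contR f -> 0 <= Ip f k x <= 30 / (1 + k^3).
Proof. intros hk0 hf. pose proof (cl_bounds k x). unfold Ip. split.
  - apply RInt_ge_0; [lra| apply exR; auto; lra|]. intros; apply hk_nonneg; lra.
  - apply Rle_trans with (RInt (fun _ => 30 / (1 + k^3)) k (cl k x)).
    + apply RInt_le; [lra| apply exR; auto; lra| apply ex_RInt_const|].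
      intros t ht. apply hk_le_piece; lra.
    + assert (0 < 30 / (1 + k^3)). { apply Rdiv_lt_0_compat. lra. assert (8 <= k^3) by (apply x3_ge; lra). lra. }
      set (c := 30 / (1 + k^3)) in *.
      rewrite RInt_const. unfold scal; simpl; unfold mult; simpl. nra. Qed.

Lemma Ip_lip f k x y : 0 <= k <= 5 -> contR f -> Rabs (Ip f k y - Ip f k x) <= 9 * Rabs (y - x).
Proof. intros hk0 hf. rewrite Ip_diff by (auto; lra).
  eapply Rle_trans. apply absRInt. apply exR; auto; lra.
  intros t _. rewrite Rabs_right. apply hk_le9; lra. apply Rle_ge, hk_nonneg; lra.
  apply Rmult_le_compat_l; [lra|]. apply cl_lip. Qed.

Lemma Ip_mono f k x y : 0 <= k -> contR f -> x <= y -> Ip f k x <= Ip f k y.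
Proof. intros hk0 hf hxy. assert (H := Ip_diff f k x y hk0 hf).
  assert (0 <= RInt (fun t => hk k t (f t)) (cl k x) (cl k y)).
  { apply RInt_ge_0. apply cl_mono; auto. apply exR; auto. intros; apply hk_nonneg; auto. }
  lra. Qed.

Lemma Ip_contr f1 f2 k x e : 2 <= k <= 5 -> contR f1 -> contR f2 -> (forall t, Rabs (f1 t - f2 t) <= e) ->
  Rabs (Ip f1 k x - Ip f2 k x) <= e / 9.
Proof. intros hk0 h1 h2 he. unfold Ip.
  assert (hm := RInt_minus (fun t => hk k t (f1 t)) (fun t => hk k t (f2 t)) k (cl k x)
     (exR k f1 k (cl k x) ltac:(lra) h1) (exR k f2 k (cl k x) ltac:(lra) h2)).
  unfold minus, plus, opp in hm; simpl in hm. unfold Rminus at 1. rewrite <- hm.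
  pose proof (cl_bounds k x).
  eapply Rle_trans. apply absRInt.
  - apply (ex_RInt_minus (V := R_NormedModule)); apply exR; auto; lra.
  - intros t ht. rewrite Rmin_left, Rmax_right in ht by lra.
    eapply Rle_trans. apply hk_lip; lra. unfold Rdiv. apply Rmult_le_compat_r; [lra|]. apply he.
  - rewrite (Rabs_right (cl k x - k)) by lra. assert (0 <= e) by (pose proof (he 0); pose proof (Rabs_pos (f1 0 - f2 0)); lra).
    nra. Qed.

Lemma Ip_der f k x : 2 <= k <= 5 -> contR f -> k < x < k + 1 -> is_derive (fun y => Ip f k y) x (hk k x (f x)).
Proof. intros hk0 hf hx.
  apply (is_derive_ext_loc (fun y => RInt (fun t => hk k t (f t)) k y)).
  - apply (loc_of x (Rmin (x - k) (k + 1 - x))). apply Rmin_glb_lt; lra.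
    intros y hy. pose proof (Rmin_l (x - k) (k + 1 - x)). pose proof (Rmin_r (x - k) (k + 1 - x)).
    apply abs_lt_b in hy. unfold Ip. rewrite cl_id; auto. lra.
  - apply (is_derive_RInt (V := R_NormedModule) (fun t => hk k t (f t)) (fun y => RInt (fun t => hk k t (f t)) k y) k x).
    + apply (loc_of x 1). lra. intros y _. apply (RInt_correct (V:=R_CompleteNormedModule)). apply exR; auto; lra.
    + apply hk_cont; auto; lra. Qed.

Lemma Ip_der0 f k x : 2 <= k <= 5 -> contR f -> (x < k \/ k + 1 < x) -> is_derive (fun y => Ip f k y) x 0.
Proof. intros hk0 hf hx.
  destruct hx as [hx|hx].
  - apply (is_derive_ext_loc (fun _ => RInt (fun t => hk k t (f t)) k k)).
    + apply (loc_of x (k - x)). lra. intros y hy. apply abs_lt_b in hy. unfold Ip. rewrite cl_low; auto. lra.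
    + apply (is_derive_const (K := R_AbsRing) (V := R_NormedModule)).
  - apply (is_derive_ext_loc (fun _ => RInt (fun t => hk k t (f t)) k (k+1))).
    + apply (loc_of x (x - (k+1))). lra. intros y hy. apply abs_lt_b in hy. unfold Ip. rewrite cl_high; auto. lra.
    + apply (is_derive_const (K := R_AbsRing) (V := R_NormedModule)). Qed.

Definition II (f : R -> R) (x : R) : R := Ip f 2 x + Ip f 3 x + Ip f 4 x + Ip f 5 x.

Lemma II_bounds f x : contR f -> 0 <= II f x <= 6.
Proof. intros hf. unfold II.
  destruct (Ip_bounds f 2 x ltac:(lra) hf). destruct (Ip_bounds f 3 x ltac:(lra) hf).
  destruct (Ip_bounds f 4 x ltac:(lra) hf). destruct (Ip_bounds f 5 x ltac:(lra) hf).
  simpl in *. lra. Qed.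

Lemma II_lip f x y : contR f -> Rabs (II f y - II f x) <= 36 * Rabs (y - x).
Proof. intros hf. unfold II.
  pose proof (Ip_lip f 2 x y ltac:(lra) hf). pose proof (Ip_lip f 3 x y ltac:(lra) hf).
  pose proof (Ip_lip f 4 x y ltac:(lra) hf). pose proof (Ip_lip f 5 x y ltac:(lra) hf).
  eapply Rle_trans. 2: right; instantiate (1 := 9 * Rabs (y - x) + 9 * Rabs (y - x) + 9 * Rabs (y - x) + 9 * Rabs (y - x)); ring.
  replace (Ip f 2 y + Ip f 3 y + Ip f 4 y + Ip f 5 y - (Ip f 2 x + Ip f 3 x + Ip f 4 x + Ip f 5 x))
    with ((Ip f 2 y - Ip f 2 x) + (Ip f 3 y - Ip f 3 x) + (Ip f 4 y - Ip f 4 x) + (Ip f 5 y - Ip f 5 x)) by ring.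
  repeat (eapply Rle_trans; [apply Rabs_triang|]; apply Rplus_le_compat; auto). Qed.

Lemma II_mono f x y : contR f -> x <= y -> II f x <= II f y.
Proof. intros hf hxy. unfold II.
  pose proof (Ip_mono f 2 x y ltac:(lra) hf hxy). pose proof (Ip_mono f 3 x y ltac:(lra) hf hxy).
  pose proof (Ip_mono f 4 x y ltac:(lra) hf hxy). pose proof (Ip_mono f 5 x y ltac:(lra) hf hxy). lra. Qed.

Lemma II_contr f1 f2 x e : contR f1 -> contR f2 -> (forall t, Rabs (f1 t - f2 t) <= e) ->
  Rabs (II f1 x - II f2 x) <= 4 * e / 9.
Proof. intros h1 h2 he. unfold II.
  pose proof (Ip_contr f1 f2 2 x e ltac:(lra) h1 h2 he). pose proof (Ip_contr f1 f2 3 x e ltac:(lra) h1 h2 he).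
  pose proof (Ip_contr f1 f2 4 x e ltac:(lra) h1 h2 he). pose proof (Ip_contr f1 f2 5 x e ltac:(lra) h1 h2 he).
  eapply Rle_trans. 2: right; instantiate (1 := e/9 + e/9 + e/9 + e/9); field.
  replace (Ip f1 2 x + Ip f1 3 x + Ip f1 4 x + Ip f1 5 x - (Ip f2 2 x + Ip f2 3 x + Ip f2 4 x + Ip f2 5 x))
    with ((Ip f1 2 x - Ip f2 2 x) + (Ip f1 3 x - Ip f2 3 x) + (Ip f1 4 x - Ip f2 4 x) + (Ip f1 5 x - Ip f2 5 x)) by ring.
  repeat (eapply Rle_trans; [apply Rabs_triang|]; apply Rplus_le_compat; auto). Qed.

Lemma II_at2 f : II f 2 = 0.
Proof. unfold II, Ip. rewrite !cl_low by lra. rewrite !RInt_point. unfold zero; simpl. ring. Qed.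

Lemma II_cont f x : contR f -> continuous (II f) x.
Proof. intros hf. apply (lip_cont _ _ 36); [lra|]. intros; apply II_lip; auto. Qed.

Lemma RInt_inv2 c : RInt (fun t => c / t^2) 2 6 = c/3.
Proof.
  assert (H : is_RInt (fun t => c / t^2) 2 6 (minus ((fun t => - c / t) 6) ((fun t => - c / t) 2))).
  { apply (is_RInt_derive (V := R_CompleteNormedModule)).
    - intros x hx. rewrite Rmin_left, Rmax_right in hx by lra.
      auto_derive. lra. field. lra.
    - intros x hx. rewrite Rmin_left, Rmax_right in hx by lra.
      apply cdiv. apply cconst. apply cpow, cid. apply pow_nonzero; lra. }
  apply (is_RInt_unique (V:=R_CompleteNormedModule)) in H. rewrite H. unfold minus, plus, opp; simpl. field. Qed.

Lemma ex_II2 f : contR f -> ex_RInt (fun t => II f t / t^2) 2 6.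
Proof. intros hf. apply (ex_RInt_continuous (V:=R_CompleteNormedModule)). intros z hz.
  rewrite Rmin_left, Rmax_right in hz by lra.
  apply cdiv. apply II_cont; auto. apply cpow, cid. apply pow_nonzero; lra. Qed.

Lemma ex_inv2 c : ex_RInt (fun t => c / t^2) 2 6.
Proof. apply (ex_RInt_continuous (V:=R_CompleteNormedModule)). intros z hz.
  rewrite Rmin_left, Rmax_right in hz by lra.
  apply cdiv. apply cconst. apply cpow, cid. apply pow_nonzero; lra. Qed.

Definition u0 (f : R -> R) : R := -13 - 3 * RInt (fun t => II f t / t^2) 2 6.
Definition T (f : R -> R) (x : R) : R := u0 f + II f x.

Lemma u0_bounds f : contR f -> -19 <= u0 f <= -13.
Proof. intros hf. unfold u0.
  assert (0 <= RInt (fun t => II f t / t^2) 2 6).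
  { apply RInt_ge_0. lra. apply ex_II2; auto. intros x hx. apply Rdiv_le_0_compat.
    apply II_bounds; auto. apply pow_lt; lra. }
  assert (RInt (fun t => II f t / t^2) 2 6 <= 2).
  { assert (hr := RInt_inv2 6). apply Rle_trans with (RInt (fun t => 6 / t^2) 2 6); [|lra]. apply RInt_le. lra. apply ex_II2; auto. apply ex_inv2.
    intros x hx. unfold Rdiv. apply Rmult_le_compat_r. apply Rlt_le, Rinv_0_lt_compat, pow_lt; lra.
    apply II_bounds; auto. }
  lra. Qed.

Lemma u0_contr f1 f2 e : contR f1 -> contR f2 -> (forall t, Rabs (f1 t - f2 t) <= e) ->
  Rabs (u0 f1 - u0 f2) <= 4 * e / 9.
Proof. intros h1 h2 he. unfold u0.
  assert (hm := RInt_minus (V := R_CompleteNormedModule) (fun t => II f1 t / t^2) (fun t => II f2 t / t^2) 2 6 (ex_II2 _ h1) (ex_II2 _ h2)).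
  change (RInt (fun x : R => II f1 x / x ^ 2 + - (II f2 x / x ^ 2)) 2 6 = RInt (fun t => II f1 t / t ^ 2) 2 6 - RInt (fun t => II f2 t / t ^ 2) 2 6) in hm.
  set (D := RInt (fun x : R => II f1 x / x ^ 2 + - (II f2 x / x ^ 2)) 2 6) in hm.
  assert (hD : Rabs D <= 4 * e / 27).
  { apply abs_le_i. assert (hr := RInt_inv2 (4 * e / 9)). replace (4 * e / 27) with ((4 * e / 9)/3) by field. rewrite <- hr.
    assert (hex : ex_RInt (fun x : R => II f1 x / x ^ 2 + - (II f2 x / x ^ 2)) 2 6).
    { apply (ex_RInt_minus (V := R_NormedModule)); apply ex_II2; auto. }
    split.
    - rewrite <- (RInt_opp (V:=R_CompleteNormedModule)) by apply ex_inv2. apply RInt_le. lra.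
      apply (ex_RInt_opp (V:=R_NormedModule)), ex_inv2. auto.
      intros x hx. unfold opp; simpl. pose proof (II_contr f1 f2 x e h1 h2 he) as hc. apply abs_le_b in hc.
      assert (0 < x^2) by (apply pow_lt; lra).
      simpl. unfold Rdiv. assert (0 < / (x * (x * 1))) by (apply Rinv_0_lt_compat; nra).
      set (s := / (x * (x * 1))) in *. nra.
    - apply RInt_le. lra. auto. apply ex_inv2.
      intros x hx. pose proof (II_contr f1 f2 x e h1 h2 he) as hc. apply abs_le_b in hc.
      assert (0 < x^2) by (apply pow_lt; lra).
      unfold Rdiv. assert (0 < / (x ^ 2)) by (apply Rinv_0_lt_compat; nra).
      set (s := / (x ^ 2)) in *. nra. }
  replace (-13 - 3 * RInt (fun t : R => II f1 t / t ^ 2) 2 6 - (-13 - 3 * RInt (fun t : R => II f2 t / t ^ 2) 2 6))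
    with (- 3 * D) by (rewrite hm; ring).
  rewrite Rabs_mult. rewrite Rabs_left by lra. lra. Qed.

Lemma T_bounds f x : contR f -> -19 <= T f x <= -7.
Proof. intros hf. unfold T. pose proof (u0_bounds f hf). pose proof (II_bounds f x hf). lra. Qed.

Lemma T_lip f x y : contR f -> Rabs (T f y - T f x) <= 36 * Rabs (y - x).
Proof. intros hf. unfold T. replace (u0 f + II f y - (u0 f + II f x)) with (II f y - II f x) by ring.
  apply II_lip; auto. Qed.

Lemma T_cont f : contR f -> contR (T f).
Proof. intros hf x. apply (lip_cont _ _ 36); [lra|]. intros; apply T_lip; auto. Qed.

Lemma T_contr f1 f2 e x : contR f1 -> contR f2 -> (forall t, Rabs (f1 t - f2 t) <= e) ->
  Rabs (T f1 x - T f2 x) <= 8 * e / 9.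
Proof. intros h1 h2 he. unfold T. pose proof (u0_contr f1 f2 e h1 h2 he). pose proof (II_contr f1 f2 x e h1 h2 he).
  replace (u0 f1 + II f1 x - (u0 f2 + II f2 x)) with ((u0 f1 - u0 f2) + (II f1 x - II f2 x)) by ring.
  eapply Rle_trans. apply Rabs_triang. lra. Qed.

Definition it (n : nat) : R -> R := Nat.iter n T (fun _ => 0).
Definition r89 := 8/9.

Lemma it_S n : it (S n) = T (it n).
Proof. reflexivity. Qed.

Lemma it_cont n : contR (it n).
Proof. induction n. intros x; apply cconst. rewrite it_S. apply T_cont; auto. Qed.

Lemma r89_pos n : 0 < r89 ^ n.
Proof. apply pow_lt. unfold r89; lra. Qed.

Lemma it_step n x : Rabs (it (S n) x - it n x) <= 20 * r89 ^ n.
Proof. revert x. induction n; intros x.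
  - simpl pow. rewrite it_S. simpl (it 0 x). pose proof (T_bounds (it 0) x (it_cont 0)).
    apply abs_le_i. lra.
  - change (Rabs (T (it (S n)) x - T (it n) x) <= 20 * r89 ^ S n). eapply Rle_trans. apply (T_contr _ _ (20 * r89 ^ n)).
    apply it_cont. apply it_cont. apply IHn.
    simpl pow. unfold r89. lra. Qed.

Lemma it_cauchy n j x : Rabs (it (n + j) x - it n x) <= 180 * r89 ^ n * (1 - r89 ^ j).
Proof. induction j.
  - rewrite Nat.add_0_r. replace (it n x - it n x) with 0 by ring. rewrite Rabs_R0. simpl. lra.
  - replace (n + S j)%nat with (S (n + j)) by lia.
    pose proof (it_step (n + j) x). rewrite pow_add in H.
    replace (it (S (n + j)) x - it n x) with ((it (S (n + j)) x - it (n + j) x) + (it (n + j) x - it n x)) by ring.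
    eapply Rle_trans. apply Rabs_triang. simpl pow. unfold r89 in *. lra. Qed.

Lemma it_cauchy2 n m x : (n <= m)%nat -> Rabs (it m x - it n x) <= 180 * r89 ^ n.
Proof. intros h. replace m with (n + (m - n))%nat by lia. eapply Rle_trans. apply it_cauchy.
  pose proof (r89_pos n). pose proof (r89_pos (m - n)). nra. Qed.

Lemma r89_small eps : 0 < eps -> exists N, forall n, (N <= n)%nat -> r89 ^ n < eps.
Proof. intros he. destruct (pow_lt_1_zero r89 ltac:(unfold r89; rewrite Rabs_right; lra) eps he) as [N HN].
  exists N. intros n hn. specialize (HN n hn). rewrite Rabs_right in HN; auto. apply Rle_ge, Rlt_le, r89_pos. Qed.

Lemma lim_small A B K : 0 <= K -> (forall n, A <= B + K * r89 ^ n) -> A <= B.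
Proof. intros hK H. apply Rnot_lt_le. intro h.
  destruct (r89_small ((A - B) / (K + 1))) as [N HN]. apply Rdiv_lt_0_compat; lra.
  specialize (HN N (le_n N)). specialize (H N). pose proof (r89_pos N).
  assert (K * r89 ^ N <= (K+1) * r89 ^ N) by nra.
  assert ((K + 1) * r89 ^ N < A - B).
  { apply Rmult_lt_reg_r with (/ (K+1)). apply Rinv_0_lt_compat; lra.
    replace ((K + 1) * r89 ^ N * / (K + 1)) with (r89 ^ N) by (field; lra). exact HN. }
  lra. Qed.

Lemma it_exlim x : ex_finite_lim_seq (fun n => it n x).
Proof. apply ex_lim_seq_cauchy_corr. intros eps.
  destruct (r89_small (eps / 400)) as [N HN]. apply Rdiv_lt_0_compat. apply cond_pos. lra.
  exists N. intros n m hn hm.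
  pose proof (it_cauchy2 N n x hn). pose proof (it_cauchy2 N m x hm). specialize (HN N (le_n N)).
  replace (it n x - it m x) with ((it n x - it N x) - (it m x - it N x)) by ring.
  eapply Rle_lt_trans. apply Rabs_triang. rewrite Rabs_Ropp. pose proof (cond_pos eps). lra. Qed.

Definition uu (x : R) : R := real (Lim_seq (fun n => it n x)).

Lemma uu_lim x : is_lim_seq (fun n => it n x) (uu x).
Proof. destruct (it_exlim x) as [l hl]. unfold uu. rewrite (is_lim_seq_unique _ _ hl). simpl. exact hl. Qed.

Lemma uu_err n x : Rabs (uu x - it n x) <= 180 * r89 ^ n.
Proof. apply abs_le_i. split.
  - assert (H : Rbar_le (it n x - 180 * r89 ^ n) (uu x)).
    { apply (is_lim_seq_le_loc (fun _ => it n x - 180 * r89 ^ n) (fun m => it m x)).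
      exists n. intros m hm. pose proof (it_cauchy2 n m x hm) as h. apply abs_le_b in h. lra.
      apply is_lim_seq_const. apply uu_lim. }
    simpl in H. lra.
  - assert (H : Rbar_le (uu x) (it n x + 180 * r89 ^ n)).
    { apply (is_lim_seq_le_loc (fun m => it m x) (fun _ => it n x + 180 * r89 ^ n)).
      exists n. intros m hm. pose proof (it_cauchy2 n m x hm) as h. apply abs_le_b in h. lra.
      apply uu_lim. apply is_lim_seq_const. }
    simpl in H. lra. Qed.

Lemma it_lip n x y : Rabs (it n y - it n x) <= 36 * Rabs (y - x).
Proof. destruct n. simpl. replace (0 - 0) with 0 by ring. rewrite Rabs_R0. pose proof (Rabs_pos (y - x)). lra.
  rewrite it_S. apply T_lip. apply it_cont. Qed.

Lemma uu_lip x y : Rabs (uu y - uu x) <= 36 * Rabs (y - x).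
Proof. apply (lim_small _ _ 360). lra. intros n.
  pose proof (uu_err n x). pose proof (uu_err n y). pose proof (it_lip n x y).
  replace (uu y - uu x) with ((uu y - it n y) + (it n y - it n x) - (uu x - it n x)) by ring.
  eapply Rle_trans. apply Rabs_triang. rewrite Rabs_Ropp.
  eapply Rle_trans. apply Rplus_le_compat_r. apply Rabs_triang. lra. Qed.

Lemma uu_cont : contR uu.
Proof. intros x. apply (lip_cont _ _ 36); [lra|]. intros; apply uu_lip. Qed.

Lemma uu_fix x : T uu x = uu x.
Proof. assert (H : Rabs (T uu x - uu x) <= 0).
  { apply (lim_small _ _ 400). lra. intros n.
    pose proof (T_contr uu (it n) (180 * r89 ^ n) x uu_cont (it_cont n) (fun t => uu_err n t)).
    pose proof (uu_err (S n) x). rewrite it_S in H0. simpl pow in H0.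
    replace (T uu x - uu x) with ((T uu x - T (it n) x) - (uu x - T (it n) x)) by ring.
    eapply Rle_trans. apply Rabs_triang. rewrite Rabs_Ropp. pose proof (r89_pos n). unfold r89 in *. lra. }
  pose proof (Rabs_pos (T uu x - uu x)). assert (Rabs (T uu x - uu x) = 0) by lra.
  apply Rabs_eq_0 in H1. lra. Qed.

Ltac req := match goal with |- @eq _ ?a ?b => change (@eq R a b) end.

Lemma uu_eq x : uu x = u0 uu + II uu x.
Proof. rewrite <- uu_fix. reflexivity. Qed.

Lemma uu_bounds x : -19 <= uu x <= -7.
Proof. rewrite <- uu_fix. apply T_bounds, uu_cont. Qed.

Definition gg (t : R) : R := uu t / t^2.

Lemma gg_cont t : t <> 0 -> continuous gg t.
Proof. intros h. unfold gg. apply cdiv. apply uu_cont. apply cpow, cid. apply pow_nonzero; auto. Qed.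

Lemma ex_gg a b : 0 < a -> 0 < b -> ex_RInt gg a b.
Proof. intros ha hb. apply (ex_RInt_continuous (V:=R_CompleteNormedModule)). intros z hz.
  apply gg_cont. assert (0 < Rmin a b) by (apply Rmin_glb_lt; auto). lra. Qed.

Lemma int_gg : RInt gg 2 6 = -13/3.
Proof.
  assert (h1 : RInt gg 2 6 = RInt (fun t => u0 uu / t^2 + II uu t / t^2) 2 6).
  { apply RInt_ext. intros x hx. unfold gg. rewrite (uu_eq x). rewrite Rmin_left, Rmax_right in hx by lra. change ((u0 uu + II uu x) / x ^ 2 = u0 uu / x ^ 2 + II uu x / x ^ 2). field. intro; lra. }
  rewrite h1.
  assert (h2 := RInt_plus (V := R_CompleteNormedModule) (fun t => u0 uu / t^2) (fun t => II uu t / t^2) 2 6 (ex_inv2 _) (ex_II2 _ uu_cont)).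
  change (RInt (fun t => u0 uu / t^2 + II uu t / t^2) 2 6 = RInt (fun t => u0 uu / t^2) 2 6 + RInt (fun t => II uu t / t^2) 2 6) in h2.
  rewrite h2, RInt_inv2.
  assert (hu : u0 uu = -13 - 3 * RInt (fun t => II uu t / t^2) 2 6) by reflexivity. rewrite hu. req. field. Qed.

Definition Vs (x : R) : R := x * (9/2 + RInt gg 2 x).
Definition Ds (x : R) : R := 9/2 + RInt gg 2 x + uu x / x.

Lemma Vs2 : Vs 2 = 9.
Proof. unfold Vs. rewrite RInt_point. unfold zero; simpl. field. Qed.
Lemma Vs6 : Vs 6 = 1.
Proof. unfold Vs. rewrite int_gg. field. Qed.

Lemma uDV x : 0 < x -> x * Ds x - Vs x = uu x.
Proof. intros h. unfold Ds, Vs. field. intro; lra. Qed.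

Lemma G_der x : 0 < x -> is_derive (fun y => RInt gg 2 y) x (gg x).
Proof. intros h. apply (is_derive_RInt (V := R_NormedModule) gg (fun y => RInt gg 2 y) 2 x).
  - apply (loc_of x (x/2)). lra. intros y hy. apply abs_lt_b in hy.
    apply (RInt_correct (V:=R_CompleteNormedModule)). apply ex_gg; lra.
  - apply gg_cont; lra. Qed.

Lemma Vs_der x : 0 < x -> is_derive Vs x (Ds x).
Proof. intros h. unfold Vs.
  assert (H := is_derive_mult (K := R_AbsRing) (fun y => y) (fun y => 9/2 + RInt gg 2 y) x 1 (0 + gg x)
     (is_derive_id (K:=R_AbsRing) x)
     (is_derive_plus (K:=R_AbsRing) (V:=R_NormedModule) (fun _ => 9/2) (fun y => RInt gg 2 y) x 0 (gg x)
        (is_derive_const (K:=R_AbsRing) (V:=R_NormedModule) _ x) (G_der x h))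
     ltac:(intros; apply Rmult_comm)).
  replace (Ds x) with (plus (mult 1 (9 / 2 + RInt gg 2 x)) (mult x (0 + gg x))).
  exact H.
  unfold plus, mult; simpl. unfold Ds, gg. field. intro; lra. Qed.

Lemma is_derive_eqv (f : R -> R) x l l' : is_derive f x l -> l = l' -> is_derive f x l'.
Proof. intros H ->; auto. Qed.

Lemma II_der f k x : (k = 2 \/ k = 3 \/ k = 4 \/ k = 5) -> k < x < k + 1 -> contR f ->
  is_derive (II f) x (hk k x (f x)).
Proof. intros hk0 hx hf. unfold II.
  assert (D2 : is_derive (fun y => Ip f 2 y) x (if Req_EM_T k 2 then hk k x (f x) else 0)).
  { destruct (Req_EM_T k 2). subst. apply Ip_der; auto; lra. apply Ip_der0; auto; lra. }
  assert (D3 : is_derive (fun y => Ip f 3 y) x (if Req_EM_T k 3 then hk k x (f x) else 0)).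
  { destruct (Req_EM_T k 3). subst. apply Ip_der; auto; lra. apply Ip_der0; auto; lra. }
  assert (D4 : is_derive (fun y => Ip f 4 y) x (if Req_EM_T k 4 then hk k x (f x) else 0)).
  { destruct (Req_EM_T k 4). subst. apply Ip_der; auto; lra. apply Ip_der0; auto; lra. }
  assert (D5 : is_derive (fun y => Ip f 5 y) x (if Req_EM_T k 5 then hk k x (f x) else 0)).
  { destruct (Req_EM_T k 5). subst. apply Ip_der; auto; lra. apply Ip_der0; auto; lra. }
  assert (H := is_derive_plus (K:=R_AbsRing) (V:=R_NormedModule) _ _ x _ _
    (is_derive_plus (K:=R_AbsRing) (V:=R_NormedModule) _ _ x _ _
      (is_derive_plus (K:=R_AbsRing) (V:=R_NormedModule) _ _ x _ _ D2 D3) D4) D5).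
  apply (is_derive_eqv _ _ _ _ H). unfold plus; simpl.
  destruct (Req_EM_T k 2); destruct (Req_EM_T k 3); destruct (Req_EM_T k 4); destruct (Req_EM_T k 5); try lra. Qed.

Lemma uu_der k x : (k = 2 \/ k = 3 \/ k = 4 \/ k = 5) -> k < x < k + 1 ->
  is_derive uu x (hk k x (uu x)).
Proof. intros hk0 hx.
  apply (is_derive_ext (fun y => u0 uu + II uu y)). intros; rewrite <- uu_eq; auto.
  apply (is_derive_eqv _ _ (plus 0 (hk k x (uu x)))).
  apply (is_derive_plus (K:=R_AbsRing) (V:=R_NormedModule)). apply (is_derive_const (K:=R_AbsRing) (V:=R_NormedModule)).
  apply II_der; auto. apply uu_cont. unfold plus; simpl; ring. Qed.

Lemma Ds_der k x : (k = 2 \/ k = 3 \/ k = 4 \/ k = 5) -> k < x < k + 1 ->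
  is_derive Ds x (Ga x (- k * uu x)).
Proof. intros hk0 hx. assert (h2 : 2 <= k) by lra.
  unfold Ds.
  assert (Hu := uu_der k x hk0 hx).
  assert (Hq := is_derive_mult (K := R_AbsRing) uu (fun y => / y) x _ _ Hu
     (is_derive_inv (fun y => y) x 1 (is_derive_id (K:=R_AbsRing) x) ltac:(simpl; lra)) ltac:(intros; apply Rmult_comm)).
  assert (H := is_derive_plus (K:=R_AbsRing) (V:=R_NormedModule) _ _ x _ _
     (is_derive_plus (K:=R_AbsRing) (V:=R_NormedModule) (fun _ => 9/2) _ x _ _ (is_derive_const (K:=R_AbsRing) (V:=R_NormedModule) _ x) (G_der x ltac:(lra))) Hq).
  apply (is_derive_eqv _ _ _ _ H). unfold plus, mult; simpl. unfold gg, hk.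
  rewrite ct_id by lra. rewrite cu_id by (pose proof (uu_bounds x); lra). unfold zero; simpl. field. intro; lra. Qed.

Lemma dpl_dw a b f x l : derivable_pt_lim f x l -> deriv_within a b f x l.
Proof. intros H eps he. destruct (H eps he) as [d hd]. exists d. split. apply cond_pos.
  intros y _ hne hy. specialize (hd (y - x) ltac:(intro; apply hne; lra) hy).
  replace (x + (y - x)) with y in hd by ring. exact hd. Qed.

Lemma isd_dw a b f x l : is_derive f x l -> deriv_within a b f x l.
Proof. intros H. apply dpl_dw. apply is_derive_Reals. exact H. Qed.

Lemma rsum_le (f g : nat -> R) n : (forall i, (i < n)%nat -> f i <= g i) -> rsum f n <= rsum g n.
Proof. induction n; simpl; intros H. lra. apply Rplus_le_compat. apply IHn; intros; apply H; lia. apply H; lia. Qed.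

Lemma rsum_scal (f : nat -> R) c n : rsum (fun i => c * f i) n = c * rsum f n.
Proof. induction n; simpl. ring. rewrite IHn. ring. Qed.

Lemma lip_ac a b f L : 0 < L -> (forall x y, a <= x <= b -> a <= y <= b -> Rabs (f y - f x) <= L * Rabs (y - x)) ->
  abs_continuous_on a b f.
Proof. intros hL H eps he. exists (eps / L). split. apply Rdiv_lt_0_compat; auto.
  intros n u v hin _ hs.
  apply Rle_lt_trans with (rsum (fun i => L * (v i - u i)) n).
  - apply rsum_le. intros i hi. destruct (hin i hi) as [h1 [h2 h3]].
    rewrite <- (Rabs_right (v i - u i)) by lra. apply H; lra.
  - rewrite rsum_scal. apply Rmult_lt_reg_r with (/ L). apply Rinv_0_lt_compat; auto.
    replace (L * rsum (fun i => v i - u i) n * / L) with (rsum (fun i => v i - u i) n) by (field; lra).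
    exact hs. Qed.

Lemma lip_co a b f L : 0 < L -> (forall x y, a <= x <= b -> a <= y <= b -> Rabs (f y - f x) <= L * Rabs (y - x)) ->
  Defs.continuous_on a b f.
Proof. intros hL H x hx eps he. exists (eps / L). split. apply Rdiv_lt_0_compat; auto.
  intros y hy hyx. eapply Rle_lt_trans. apply H; auto.
  apply Rmult_lt_reg_r with (/ L). apply Rinv_0_lt_compat; auto.
  replace (L * Rabs (y - x) * / L) with (Rabs (y - x)) by (field; lra). exact hyx. Qed.

Lemma absq_le A y : 2 <= y -> Rabs (A / y) <= Rabs A / 2.
Proof. intros hy. unfold Rdiv. rewrite Rabs_mult, Rabs_inv, (Rabs_right y) by lra.
  apply Rmult_le_compat_l. apply Rabs_pos. apply Rinv_le_contravar; lra. Qed.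

Lemma Ds_lip x y : 2 <= x <= 6 -> 2 <= y <= 6 -> Rabs (Ds y - Ds x) <= 40 * Rabs (y - x).
Proof. intros hx hy. unfold Ds.
  assert (hc : RInt gg 2 y - RInt gg 2 x = RInt gg x y).
  { rewrite <- (RInt_Chasles (V:=R_CompleteNormedModule) gg 2 x y) by (apply ex_gg; lra).
    unfold plus; simpl. ring. }
  assert (h1 : Rabs (RInt gg x y) <= 5 * Rabs (y - x)).
  { apply absRInt. apply ex_gg; lra. intros t ht. unfold gg.
    assert (2 <= t). { assert (2 <= Rmin x y) by (apply Rmin_glb; lra). lra. }
    pose proof (uu_bounds t). assert (4 <= t^2) by nra.
    unfold Rdiv. rewrite Rabs_mult, Rabs_inv, (Rabs_right (t^2)) by lra.
    apply Rle_trans with (19 * / 4). apply Rmult_le_compat. apply Rabs_pos. apply Rlt_le, Rinv_0_lt_compat; lra.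
    apply abs_le_i; lra. apply Rinv_le_contravar; lra. lra. }
  assert (h2 : Rabs (uu y / y - uu x / x) <= 25 * Rabs (y - x)).
  { replace (uu y / y - uu x / x) with ((uu y - uu x) / y + uu x * (x - y) / (x * y)) by (field; split; intro; lra).
    eapply Rle_trans. apply Rabs_triang.
    pose proof (uu_lip x y). pose proof (uu_bounds x).
    assert (Rabs ((uu y - uu x) / y) <= 18 * Rabs (y - x)).
    { eapply Rle_trans. apply absq_le; lra. lra. }
    assert (Rabs (uu x * (x - y) / (x * y)) <= 5 * Rabs (y - x)).
    { unfold Rdiv. rewrite !Rabs_mult, Rabs_inv, (Rabs_right (x*y)) by nra. rewrite Rabs_minus_sym.
      assert (Rabs (uu x) <= 19) by (apply abs_le_i; lra).
      assert (/ (x * y) <= / 4) by (apply Rinv_le_contravar; nra).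
      assert (0 < / (x*y)) by (apply Rinv_0_lt_compat; nra).
      pose proof (Rabs_pos (uu x)). pose proof (Rabs_pos (y - x)).
      set (A := Rabs (uu x)) in *. set (B := Rabs (y - x)) in *. set (s := / (x * y)) in *.
      assert (A * s <= 19 / 4) by nra.
      replace (A * B * s) with ((A * s) * B) by ring. nra. }
    pose proof (Rabs_pos (y - x)). lra. }
  replace (9 / 2 + RInt gg 2 y + uu y / y - (9 / 2 + RInt gg 2 x + uu x / x))
    with ((RInt gg 2 y - RInt gg 2 x) + (uu y / y - uu x / x)) by ring.
  rewrite hc. eapply Rle_trans. apply Rabs_triang. pose proof (Rabs_pos (y - x)). lra. Qed.

Definition EE (x : R) : Prop := x = 2 \/ x = 3 \/ x = 4 \/ x = 5 \/ x = 6.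

Lemma null_pt c : null_set (fun x => x = c).
Proof. intros eps he. exists (fun k => if Nat.eqb k 0 then c - eps/4 else c).
  exists (fun k => if Nat.eqb k 0 then c + eps/4 else c).
  split. intros k; destruct (Nat.eqb k 0); lra.
  split. intros x ->. exists 0%nat. simpl. lra.
  assert (H : forall n, rsum (fun k => (if Nat.eqb k 0 then c + eps / 4 else c) - (if Nat.eqb k 0 then c - eps / 4 else c)) n <= eps / 2).
  { induction n. simpl. lra. simpl rsum. destruct n. simpl. lra.
    replace (Nat.eqb (S n) 0) with false by reflexivity. lra. }
  intros n. specialize (H n). lra. Qed.

Lemma EE_null : null_set EE.
Proof. unfold EE.
  apply (null_union (fun x => x = 2) (fun x => x = 3 \/ x = 4 \/ x = 5 \/ x = 6)). apply null_pt.
  apply (null_union (fun x => x = 3) (fun x => x = 4 \/ x = 5 \/ x = 6)). apply null_pt.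
  apply (null_union (fun x => x = 4) (fun x => x = 5 \/ x = 6)). apply null_pt.
  apply (null_union (fun x => x = 5) (fun x => x = 6)); apply null_pt. Qed.

Lemma classify x : 2 <= x <= 6 -> ~ EE x -> exists k, (k = 2 \/ k = 3 \/ k = 4 \/ k = 5) /\ k < x < k + 1.
Proof. intros hx hE. unfold EE in hE.
  destruct (Rlt_le_dec x 3). exists 2. split. auto. split; [|lra]. destruct (Req_dec x 2); [tauto|lra].
  destruct (Rlt_le_dec x 4). exists 3. split. auto. split; [|lra]. destruct (Req_dec x 3); [tauto|lra].
  destruct (Rlt_le_dec x 5). exists 4. split. auto. split; [|lra]. destruct (Req_dec x 4); [tauto|lra].
  exists 5. split. auto. destruct (Req_dec x 5); [tauto|]. destruct (Req_dec x 6); [tauto|]. lra. Qed.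

Lemma q_val k x : (k = 2 \/ k = 3 \/ k = 4 \/ k = 5) -> k < x < k + 1 -> q x = k.
Proof. intros hk hx. unfold q, Int_part.
  assert (forall z : Z, IZR z = k -> IZR (up x - 1) = k).
  { intros z hz. rewrite <- (tech_up x (z + 1)). rewrite minus_IZR, plus_IZR. simpl. lra.
    rewrite plus_IZR; simpl; lra. rewrite plus_IZR; simpl; lra. }
  destruct hk as [ -> | [ -> | [ -> | -> ]]]; [apply (H 2%Z)|apply (H 3%Z)|apply (H 4%Z)|apply (H 5%Z)]; reflexivity. Qed.

Lemma Ds_good x : 2 <= x <= 6 -> ~ EE x -> exists w, derivable_pt_lim Ds x w /\ 0 <= w /\
  x ^ 3 * w ^ 2 + p x * x ^ 2 * w + q x * (x * Ds x - Vs x) = 0.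
Proof. intros hx hE. destruct (classify x hx hE) as [k [hk hkx]].
  exists (Ga x (- k * uu x)). pose proof (uu_bounds x).
  split. apply is_derive_Reals. apply Ds_der; auto.
  split. apply Ga_nonneg; lra || nra.
  rewrite (q_val k x hk hkx), uDV by lra.
  assert (H1 := Ga_eq x (- k * uu x) ltac:(lra) ltac:(nra)). unfold bb in H1. unfold p. nra. Qed.

Lemma Ds_mono x y : 2 <= x -> x <= y -> y <= 6 -> Ds x <= Ds y.
Proof. intros h1 h2 h3. apply (L1 x y Ds EE h2 EE_null).
  - apply acN_of_ac. apply (lip_ac _ _ _ 40). lra. intros; apply Ds_lip; lra.
  - intros z hz hE. destruct (Ds_good z ltac:(lra) hE) as [w [hd [hw _]]]. exists w; split; auto.
    apply dpl_dw; auto. Qed.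

Lemma Vs_cont x : 0 < x -> continuity_pt Vs x.
Proof. intros h. apply continuity_pt_filterlim. apply (ex_derive_continuous (K:=R_AbsRing) (V:=R_NormedModule)).
  exists (Ds x). apply Vs_der; auto. Qed.

Lemma tangent s z : 2 <= s <= 6 -> 2 <= z <= 6 -> Vs z + Ds z * (s - z) <= Vs s.
Proof. intros hs hz. destruct (MVT_gen Vs z s Ds) as [c [hc hm]].
  - intros x hx. apply Vs_der. assert (2 <= Rmin z s) by (apply Rmin_glb; lra). lra.
  - intros x hx. apply Vs_cont. assert (2 <= Rmin z s) by (apply Rmin_glb; lra). lra.
  - destruct (Rle_dec z s).
    + rewrite Rmin_left, Rmax_right in hc by lra. assert (Ds z <= Ds c) by (apply Ds_mono; lra). nra.
    + rewrite Rmin_right, Rmax_left in hc by lra. assert (Ds c <= Ds z) by (apply Ds_mono; lra). nra. Qed.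

Lemma Vs_sol : is_solution Vs.
Proof. exists Ds. split; [split|split; [|split; [|split]]].
  - intros x hx. unfold in_cc in hx. apply isd_dw. apply Vs_der. lra.
  - apply (lip_co _ _ _ 40). lra. intros; apply Ds_lip; auto.
  - apply (lip_ac _ _ _ 40). lra. intros; apply Ds_lip; auto.
  - exists EE. split. apply EE_null. intros x hx hE. unfold in_cc in hx.
    destruct (Ds_good x hx hE) as [w [h1 [_ h3]]]. exists w; auto.
  - apply Vs2.
  - apply Vs6. Qed.

Lemma Vs_convex : convex_on 2 6 Vs.
Proof. intros x y t hx hy ht. unfold in_cc in *.
  set (z := t * x + (1 - t) * y).
  assert (hz : 2 <= z <= 6) by (unfold z; split; nra).
  pose proof (tangent x z hx hz). pose proof (tangent y z hy hz).
  assert (t * (Vs z + Ds z * (x - z)) <= t * Vs x) by (apply Rmult_le_compat_l; lra).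
  assert ((1 - t) * (Vs z + Ds z * (y - z)) <= (1 - t) * Vs y) by (apply Rmult_le_compat_l; lra).
  assert (t * (Vs z + Ds z * (x - z)) + (1 - t) * (Vs z + Ds z * (y - z)) = Vs z) by (unfold z; ring).
  lra. Qed.

Lemma Vs_interval : in_fun_interval 2 6 lower_fn upper_fn Vs.
Proof. intros x hx. unfold in_cc in hx. unfold lower_fn, upper_fn.
  assert (h2 := tangent x 2 hx ltac:(lra)). assert (h6 := tangent x 6 hx ltac:(lra)).
  assert (hx2 := tangent 2 x ltac:(lra) hx). assert (hx6 := tangent 6 x ltac:(lra) hx).
  rewrite Vs2 in h2, hx2. rewrite Vs6 in h6, hx6.
  assert (hD2 : 2 * Ds 2 - Vs 2 = uu 2) by (apply uDV; lra).
  assert (hD6 : 6 * Ds 6 - Vs 6 = uu 6) by (apply uDV; lra).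
  rewrite Vs2 in hD2. rewrite Vs6 in hD6.
  pose proof (uu_bounds 2). pose proof (uu_bounds 6).
  split.
  - apply Rmax_lub.
    + nra.
    + destruct (Rle_dec x 5.5). nra. nra.
  - assert ((6 - x) / 4 * (Vs x + Ds x * (2 - x)) + (x - 2) / 4 * (Vs x + Ds x * (6 - x)) = Vs x) by (field).
    assert ((6 - x) / 4 * (Vs x + Ds x * (2 - x)) <= (6 - x) / 4 * 9) by (apply Rmult_le_compat_l; lra).
    assert ((x - 2) / 4 * (Vs x + Ds x * (6 - x)) <= (x - 2) / 4 * 1) by (apply Rmult_le_compat_l; lra).
    lra. Qed.

Lemma Vs_csol : convex_solution_in Vs.
Proof. split; [apply Vs_sol|split; [apply Vs_convex|apply Vs_interval]]. Qed.

Definition cw (a b : R) (f : R -> R) (x : R) : Prop :=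
  forall eps, 0 < eps -> exists d, 0 < d /\ forall y, a <= y <= b -> Rabs (y - x) < d -> Rabs (f y - f x) < eps.

Lemma dw_cw a b f x l : deriv_within a b f x l -> cw a b f x.
Proof. intros H eps he. destruct (H 1 Rlt_0_1) as [d [hd Hd]]. pose proof (Rabs_pos l).
  exists (Rmin d (eps / (Rabs l + 1))). split. apply Rmin_glb_lt; auto. apply Rdiv_lt_0_compat; lra.
  intros y hy hyx. destruct (Req_dec y x) as [->|hne]. replace (f x - f x) with 0 by ring; rewrite Rabs_R0; auto.
  assert (hq := Hd y hy hne (Rlt_le_trans _ _ _ hyx (Rmin_l _ _))).
  assert (hqq : Rabs ((f y - f x) / (y - x)) <= Rabs l + 1).
  { apply abs_lt_b in hq. apply abs_le_i. pose proof (abs_ge_self l). lra. }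
  replace (f y - f x) with ((f y - f x) / (y - x) * (y - x)) by (field; lra).
  rewrite Rabs_mult.
  apply Rle_lt_trans with ((Rabs l + 1) * Rabs (y - x)). apply Rmult_le_compat_r; [apply Rabs_pos|auto].
  apply Rlt_le_trans with ((Rabs l + 1) * (eps / (Rabs l + 1))).
  apply Rmult_lt_compat_l. lra. eapply Rlt_le_trans; [apply hyx| apply Rmin_r].
  right; field. lra. Qed.

Lemma cw_ext f x : 2 <= x <= 6 -> cw 2 6 f x -> continuous (fun y => f (ct y)) x.
Proof. intros hx H. apply continuity_pt_filterlim.
  unfold continuity_pt, continue_in, limit1_in, limit_in; simpl; unfold R_dist.
  intros eps he. destruct (H eps he) as [d [hd Hd]]. exists d. split; auto.
  intros y [_ hy]. rewrite (ct_id x hx). apply Hd. apply ct_bounds.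
  eapply Rle_lt_trans; [|apply hy]. rewrite <- (ct_id x hx) at 1. apply ct_lip. Qed.

Lemma cont_eps h x : continuous h x -> forall eps, 0 < eps -> exists d, 0 < d /\ forall y, Rabs (y - x) < d -> Rabs (h y - h x) < eps.
Proof. intros H. apply continuity_pt_filterlim in H.
  unfold continuity_pt, continue_in, limit1_in, limit_in in H; simpl in H; unfold R_dist in H.
  intros eps he. destruct (H eps he) as [d [hd Hd]]. exists d; split; auto. intros y hy.
  destruct (Req_dec y x) as [->|hne]. replace (h x - h x) with 0 by ring; rewrite Rabs_R0; auto.
  apply Hd. split; auto. unfold D_x, no_cond. split; auto. Qed.

Lemma max_deriv0 a b f x l : deriv_within a b f x l -> a < x < b -> (forall y, a <= y <= b -> f y <= f x) -> l = 0.
Proof. intros H hx hm. destruct (Rtotal_order l 0) as [hl|[hl|hl]]; auto; exfalso.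
  - destruct (H (- l) ltac:(lra)) as [d [hd Hd]].
    set (y := x - Rmin (d/2) ((x - a)/2)).
    assert (h1 : 0 < Rmin (d/2) ((x - a)/2)) by (apply Rmin_glb_lt; lra).
    pose proof (Rmin_l (d/2) ((x - a)/2)). pose proof (Rmin_r (d/2) ((x - a)/2)).
    assert (hy : a <= y <= b) by (unfold y; lra).
    specialize (Hd y hy ltac:(unfold y; lra) ltac:(unfold y; rewrite Rabs_left; lra)).
    apply abs_lt_b in Hd. specialize (hm y hy).
    assert (hq : 0 <= (f y - f x) / (y - x)).
    { replace ((f y - f x) / (y - x)) with ((f x - f y) / (x - y)) by (field; unfold y; lra).
      apply Rdiv_le_0_compat; unfold y in *; lra. }
    lra.
  - destruct (H l hl) as [d [hd Hd]].
    set (y := x + Rmin (d/2) ((b - x)/2)).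
    assert (h1 : 0 < Rmin (d/2) ((b - x)/2)) by (apply Rmin_glb_lt; lra).
    pose proof (Rmin_l (d/2) ((b - x)/2)). pose proof (Rmin_r (d/2) ((b - x)/2)).
    assert (hy : a <= y <= b) by (unfold y; lra).
    specialize (Hd y hy ltac:(unfold y; lra) ltac:(unfold y; rewrite Rabs_right; lra)).
    apply abs_lt_b in Hd. specialize (hm y hy).
    assert (hq : (f y - f x) / (y - x) <= 0).
    { replace ((f y - f x) / (y - x)) with (- ((f x - f y) / (y - x))) by (field; unfold y; lra).
      assert (0 <= (f x - f y) / (y - x)) by (apply Rdiv_le_0_compat; unfold y in *; lra). lra. }
    lra. Qed.

Lemma conv_slope V D x y : convex_on 2 6 V -> (forall z, in_cc 2 6 z -> deriv_within 2 6 V z (D z)) ->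
  2 <= x -> x < y -> y <= 6 -> D x <= (V y - V x) / (y - x) <= D y.
Proof. intros hc hd h1 h2 h3. set (s := (V y - V x) / (y - x)).
  assert (hs : V y - V x = s * (y - x)) by (unfold s; field; lra).
  split.
  - apply Rnot_lt_le. intro hlt. destruct (hd x ltac:(unfold in_cc; lra) (D x - s) ltac:(lra)) as [d [hdp Hd]].
    set (z := x + Rmin (d/2) (y - x)).
    assert (h0 : 0 < Rmin (d/2) (y - x)) by (apply Rmin_glb_lt; lra).
    pose proof (Rmin_l (d/2) (y - x)). pose proof (Rmin_r (d/2) (y - x)).
    set (t := (y - z) / (y - x)).
    assert (ht : 0 <= t <= 1). { unfold t. split. apply Rdiv_le_0_compat; unfold z; lra.
      apply Rmult_le_reg_r with (y - x); [lra|]. unfold Rdiv; rewrite Rmult_assoc, Rinv_l by lra. unfold z; lra. }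
    assert (hcv := hc x y t ltac:(unfold in_cc; lra) ltac:(unfold in_cc; lra) ht).
    replace (t * x + (1 - t) * y) with z in hcv by (unfold t; field; lra).
    assert (hz : V z - V x <= s * (z - x)).
    { replace (t * V x + (1 - t) * V y) with (V x + (1 - t) * (V y - V x)) in hcv by ring.
      rewrite hs in hcv. replace ((1 - t) * (s * (y - x))) with (s * (z - x)) in hcv by (unfold t; field; lra). lra. }
    specialize (Hd z ltac:(unfold z, in_cc; lra) ltac:(unfold z; lra) ltac:(unfold z; rewrite Rabs_right; lra)).
    apply abs_lt_b in Hd.
    assert ((V z - V x) / (z - x) <= s). { apply Rmult_le_reg_r with (z - x). unfold z; lra.
      unfold Rdiv; rewrite Rmult_assoc, Rinv_l by (unfold z; lra). lra. }
    lra.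
  - apply Rnot_lt_le. intro hlt. destruct (hd y ltac:(unfold in_cc; lra) (s - D y) ltac:(lra)) as [d [hdp Hd]].
    set (z := y - Rmin (d/2) (y - x)).
    assert (h0 : 0 < Rmin (d/2) (y - x)) by (apply Rmin_glb_lt; lra).
    pose proof (Rmin_l (d/2) (y - x)). pose proof (Rmin_r (d/2) (y - x)).
    set (t := (y - z) / (y - x)).
    assert (ht : 0 <= t <= 1). { unfold t. split. apply Rdiv_le_0_compat; unfold z; lra.
      apply Rmult_le_reg_r with (y - x); [lra|]. unfold Rdiv; rewrite Rmult_assoc, Rinv_l by lra. unfold z; lra. }
    assert (hcv := hc x y t ltac:(unfold in_cc; lra) ltac:(unfold in_cc; lra) ht).
    replace (t * x + (1 - t) * y) with z in hcv by (unfold t; field; lra).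
    assert (hz : V z - V y <= - s * (y - z)).
    { replace (t * V x + (1 - t) * V y) with (V y - t * (V y - V x)) in hcv by ring.
      rewrite hs in hcv. replace (t * (s * (y - x))) with (s * (y - z)) in hcv by (unfold t; field; lra). lra. }
    specialize (Hd z ltac:(unfold z, in_cc; lra) ltac:(unfold z; lra) ltac:(unfold z; rewrite Rabs_left; lra)).
    apply abs_lt_b in Hd.
    assert (s <= (V z - V y) / (z - y)). { apply Rmult_le_reg_r with (y - z). unfold z; lra.
      replace ((V z - V y) / (z - y) * (y - z)) with (- (V z - V y)) by (field; unfold z; lra). lra. }
    lra. Qed.

Lemma conv_mono V D x y : convex_on 2 6 V -> (forall z, in_cc 2 6 z -> deriv_within 2 6 V z (D z)) ->
  2 <= x -> x <= y -> y <= 6 -> D x <= D y.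
Proof. intros hc hd h1 h2 h3. destruct (Req_dec x y) as [->|hne]. lra.
  destruct (conv_slope V D x y hc hd h1 ltac:(lra) h3). lra. Qed.

Lemma dpl_nonneg (D : R -> R) x w r : 0 < r -> (forall y, x <= y <= x + r -> D x <= D y) -> derivable_pt_lim D x w -> 0 <= w.
Proof. intros hr hm H. apply Rnot_lt_le. intro hw. destruct (H (- w) ltac:(lra)) as [d Hd].
  pose proof (cond_pos d).
  set (h := Rmin (d/2) r). assert (h0 : 0 < h) by (apply Rmin_glb_lt; lra).
  pose proof (Rmin_l (d/2) r). pose proof (Rmin_r (d/2) r).
  specialize (Hd h ltac:(unfold h in *; lra) ltac:(rewrite Rabs_right; unfold h in *; lra)).
  apply abs_lt_b in Hd. specialize (hm (x + h) ltac:(unfold h in *; lra)).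
  assert (0 <= (D (x + h) - D x) / h) by (apply Rdiv_le_0_compat; lra). lra. Qed.

Lemma q_bounds x : 2 <= x <= 6 -> 2 <= q x <= 6.
Proof. intros hx. unfold q. destruct (base_Int_part x) as [h1 h2].
  assert (IZR 1 < IZR (Int_part x)) by (simpl; lra). apply lt_IZR in H.
  assert (2 <= Int_part x)%Z by lia. apply IZR_le in H0. simpl in H0. lra. Qed.

Definition good (V Dv : R -> R) (N : R -> Prop) : Prop :=
  C1_with_deriv 2 6 V Dv /\ abs_continuous_on 2 6 Dv /\ null_set N /\
  (forall x, 2 < x < 6 -> ~ N x -> exists w, derivable_pt_lim Dv x w /\ 0 <= w /\
     x ^ 3 * w ^ 2 + p x * x ^ 2 * w + q x * (x * Dv x - V x) = 0).

Lemma good_Vs : good Vs Ds EE.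
Proof. destruct Vs_sol as [D0 _]. split; [|split; [|split]].
  - split. intros x hx. unfold in_cc in hx. apply isd_dw. apply Vs_der. lra.
    apply (lip_co _ _ _ 40). lra. intros; apply Ds_lip; auto.
  - apply (lip_ac _ _ _ 40). lra. intros; apply Ds_lip; auto.
  - apply EE_null.
  - intros x hx hE. destruct (Ds_good x ltac:(lra) hE) as [w [h1 [h2 h3]]]. exists w; auto. Qed.

Lemma good_conv V : convex_solution_in V -> exists Dv N, good V Dv N /\ V 2 = 9 /\ V 6 = 1.
Proof. intros [[Dv [[hd hc] [hac [[N [hN hae]] [h2 h6]]]]] [hconv _]].
  exists Dv, N. split; [|auto]. split; [split; auto|split; [auto|split; [auto|]]].
  intros x hx hNx. destruct (hae x ltac:(unfold in_cc; lra) hNx) as [w [hw heq]].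
  exists w. split; auto. split; auto.
  apply (dpl_nonneg Dv x w (6 - x)). lra. intros y hy. apply (conv_mono V Dv); auto; lra. auto. Qed.

Lemma dw_sub a b a' b' f x l : a <= a' -> b' <= b -> deriv_within a b f x l -> deriv_within a' b' f x l.
Proof. intros h1 h2 H eps he. destruct (H eps he) as [d [hd Hd]]. exists d; split; auto.
  intros y hy. apply Hd. unfold in_cc in *; lra. Qed.

Lemma tri3 A B C : Rabs (A - B - C) <= Rabs A + Rabs B + Rabs C.
Proof. apply abs_le_i. pose proof (abs_ge_self A). pose proof (abs_ge_self B). pose proof (abs_ge_self C). lra. Qed.

Lemma dw_comb a b f g x l1 l2 c x0 : deriv_within a b f x l1 -> deriv_within a b g x l2 ->
  deriv_within a b (fun y => f y - g y - c / 2 * (y - x0)^2) x (l1 - l2 - c * (x - x0)).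
Proof. intros H1 H2 eps he.
  destruct (H1 (eps/3) ltac:(lra)) as [d1 [hd1 Hd1]]. destruct (H2 (eps/3) ltac:(lra)) as [d2 [hd2 Hd2]].
  pose proof (Rabs_pos c).
  set (d3 := eps / (3 * (Rabs c + 1))).
  assert (hd3 : 0 < d3) by (apply Rdiv_lt_0_compat; lra).
  exists (Rmin d1 (Rmin d2 d3)). split. repeat apply Rmin_glb_lt; auto.
  intros y hy hne hyx.
  pose proof (Rmin_l d1 (Rmin d2 d3)). pose proof (Rmin_r d1 (Rmin d2 d3)).
  pose proof (Rmin_l d2 d3). pose proof (Rmin_r d2 d3).
  specialize (Hd1 y hy hne ltac:(lra)). specialize (Hd2 y hy hne ltac:(lra)).
  replace ((f y - g y - c / 2 * (y - x0) ^ 2 - (f x - g x - c / 2 * (x - x0) ^ 2)) / (y - x) - (l1 - l2 - c * (x - x0)))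
    with (((f y - f x) / (y - x) - l1) - ((g y - g x) / (y - x) - l2) - c / 2 * (y - x)) by (field; lra).
  assert (h3 : Rabs (c / 2 * (y - x)) < eps / 3).
  { replace (c / 2 * (y - x)) with ((c * (y - x)) / 2) by field.
    apply Rle_lt_trans with (Rabs c * Rabs (y - x)).
    { rewrite <- Rabs_mult. apply abs_le_i. pose proof (abs_ge_self (c * (y - x))). lra. }
    apply Rle_lt_trans with ((Rabs c + 1) * Rabs (y - x)). pose proof (Rabs_pos (y - x)). nra.
    apply Rlt_le_trans with ((Rabs c + 1) * d3). apply Rmult_lt_compat_l; lra.
    unfold d3. right. field. lra. }
  eapply Rle_lt_trans. apply tri3. lra. Qed.

Lemma dw_ext a b f g x l : (forall y, f y = g y) -> deriv_within a b f x l -> deriv_within a b g x l.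
Proof. intros he H eps hep. destruct (H eps hep) as [d [hd Hd]]. exists d; split; auto.
  intros y hy hne hyx. rewrite <- !he. auto. Qed.

Lemma dpl_comb (DA DB : R -> R) z wA wB c : derivable_pt_lim DA z wA -> derivable_pt_lim DB z wB ->
  derivable_pt_lim (fun y => DA y - DB y - c * y) z (wA - wB - c).
Proof. intros HA HB. apply is_derive_Reals. apply is_derive_Reals in HA, HB.
  assert (H1 := is_derive_minus (K:=R_AbsRing) (V:=R_NormedModule) _ _ z _ _ HA HB).
  assert (H2 := is_derive_scal (fun y => y) z c 1 (is_derive_id (K:=R_AbsRing) z)).
  assert (H3 := is_derive_minus (K:=R_AbsRing) (V:=R_NormedModule) _ _ z _ _ H1 H2).
  apply (is_derive_eqv _ _ _ _ H3). unfold minus, plus, opp; simpl. ring. Qed.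

Lemma rsum_plus (f g : nat -> R) n : rsum (fun i => f i + g i) n = rsum f n + rsum g n.
Proof. induction n; simpl. ring. rewrite IHn. ring. Qed.

Lemma ac_comb a b a' b' f g c : a <= a' -> b' <= b -> 0 <= c -> abs_continuous_on a b f -> abs_continuous_on a b g ->
  abs_continuous_on a' b' (fun y => f y - g y - c * y).
Proof. intros h1 h2 hc Hf Hg eps he.
  destruct (Hf (eps/3) ltac:(lra)) as [d1 [hd1 Hd1]]. destruct (Hg (eps/3) ltac:(lra)) as [d2 [hd2 Hd2]].
  set (d3 := eps / (3 * (c + 1))). assert (hd3 : 0 < d3) by (apply Rdiv_lt_0_compat; lra).
  exists (Rmin d1 (Rmin d2 d3)). split. repeat apply Rmin_glb_lt; auto.
  intros n u v hin hord hs.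
  pose proof (Rmin_l d1 (Rmin d2 d3)). pose proof (Rmin_r d1 (Rmin d2 d3)).
  pose proof (Rmin_l d2 d3). pose proof (Rmin_r d2 d3).
  assert (hin' : forall i, (i < n)%nat -> a <= u i /\ u i <= v i /\ v i <= b).
  { intros i hi. destruct (hin i hi) as [? [? ?]]. repeat split; lra. }
  specialize (Hd1 n u v hin' hord ltac:(lra)). specialize (Hd2 n u v hin' hord ltac:(lra)).
  apply Rle_lt_trans with (rsum (fun i => Rabs (f (v i) - f (u i)) + Rabs (g (v i) - g (u i)) + c * (v i - u i)) n).
  - apply rsum_le. intros i hi. destruct (hin i hi) as [? [? ?]].
    replace (f (v i) - g (v i) - c * v i - (f (u i) - g (u i) - c * u i))
      with ((f (v i) - f (u i)) - (g (v i) - g (u i)) - c * (v i - u i)) by ring.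
    eapply Rle_trans. apply Rabs_triang. rewrite Rabs_Ropp.
    eapply Rle_trans. apply Rplus_le_compat_r. apply Rabs_triang. rewrite Rabs_Ropp.
    rewrite (Rabs_right (c * (v i - u i))) by nra. lra.
  - rewrite !rsum_plus, rsum_scal.
    assert (c * rsum (fun i => v i - u i) n <= c * d3) by (apply Rmult_le_compat_l; lra).
    assert (c * d3 < eps / 3). { unfold d3. apply Rmult_lt_reg_r with (3 * (c+1)). lra.
      replace (c * (eps / (3 * (c + 1))) * (3 * (c + 1))) with (c * eps) by (field; lra). nra. }
    lra. Qed.

Lemma key z wA wB uA uB qz m K1 K2 : 2 <= z <= 6 -> 2 <= qz <= 6 -> 0 <= wA -> 0 <= wB ->
  z ^ 3 * wA ^ 2 + p z * z ^ 2 * wA + qz * uA = 0 ->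
  z ^ 3 * wB ^ 2 + p z * z ^ 2 * wB + qz * uB = 0 ->
  uA - uB <= - m / 2 -> Rabs uA <= K1 -> Rabs uB <= K2 -> 0 < m ->
  m / (36 * (K1 + K2) + 7812) <= wA - wB.
Proof. intros hz hq hA hB eA eB hu hK1 hK2 hm.
  unfold p in *. set (P := (1 + z^3) * z^2) in *.
  assert (hz3 : 8 <= z^3 <= 216). { split. apply x3_ge; lra. assert (z^3 <= 6^3) by (apply pow_incr; lra). simpl in *; lra. }
  assert (hz2 : 4 <= z^2 <= 36). { split; nra. }
  assert (hP : 36 <= P <= 7812). { unfold P. split; nra. }
  apply abs_le_b in hK1. apply abs_le_b in hK2.
  assert (hwA : P * wA <= 6 * K1). { assert (0 <= z^3 * wA^2) by (apply Rmult_le_pos; nra). assert (- (qz * uA) <= 6 * K1) by nra.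
    lra. }
  assert (hwB : P * wB <= 6 * K2). { assert (0 <= z^3 * wB^2) by (apply Rmult_le_pos; nra). assert (- (qz * uB) <= 6 * K2) by nra.
    lra. }
  assert (hA6 : wA <= K1 / 6). { apply Rmult_le_reg_l with P. lra. apply Rle_trans with (6 * K1). lra.
    apply Rle_trans with (36 * (K1 / 6)). lra. apply Rmult_le_compat_r; lra. }
  assert (hB6 : wB <= K2 / 6). { apply Rmult_le_reg_l with P. lra. apply Rle_trans with (6 * K2). lra.
    apply Rle_trans with (36 * (K2 / 6)). lra. apply Rmult_le_compat_r; lra. }
  set (den := z^3 * (wA + wB) + P).
  assert (hden : 36 <= den <= 36 * (K1 + K2) + 7812).
  { unfold den. split. nra. assert (z^3 * (wA + wB) <= 216 * (K1/6 + K2/6)) by nra. lra. }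
  assert (heq : (wA - wB) * den = - qz * (uA - uB)) by (unfold den, P in *; nra).
  assert (hge : m <= (wA - wB) * den) by nra.
  assert (hpos : 0 < wA - wB) by nra.
  apply Rmult_le_reg_r with (36 * (K1 + K2) + 7812). lra.
  replace (m / (36 * (K1 + K2) + 7812) * (36 * (K1 + K2) + 7812)) with m by (field; lra). nra. Qed.

Lemma compare A DA NA B DB NB : good A DA NA -> good B DB NB -> A 2 = B 2 -> A 6 = B 6 ->
  forall x, 2 <= x <= 6 -> A x <= B x.
Proof.
  intros [[hdA hcA] [hacA [hnA hwA]]] [[hdB hcB] [hacB [hnB hwB]]] h2 h6 x1 hx1.
  apply Rnot_lt_le; intro hlt.
  set (e := fun y => A y - B y).
  assert (cA : forall y, 2 <= y <= 6 -> cw 2 6 A y) by (intros y hy; eapply dw_cw; apply hdA; unfold in_cc; lra).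
  assert (cB : forall y, 2 <= y <= 6 -> cw 2 6 B y) by (intros y hy; eapply dw_cw; apply hdB; unfold in_cc; lra).
  assert (cDA : forall y, 2 <= y <= 6 -> cw 2 6 DA y) by (intros y hy; exact (hcA y hy)).
  assert (cDB : forall y, 2 <= y <= 6 -> cw 2 6 DB y) by (intros y hy; exact (hcB y hy)).
  assert (hev : forall c, 2 <= c <= 6 -> continuity_pt (fun y => e (ct y)) c).
  { intros c hc. apply continuity_pt_filterlim. unfold e. apply (cminus (fun y => A (ct y)) (fun y => B (ct y))); apply cw_ext; auto. }
  destruct (continuity_ab_maj _ 2 6 ltac:(lra) hev) as [x0 [hmax hx0]].
  assert (hmax' : forall y, 2 <= y <= 6 -> e y <= e x0).
  { intros y hy. specialize (hmax y hy). rewrite !ct_id in hmax; auto. }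
  assert (hm : 0 < e x0). { specialize (hmax' x1 hx1). unfold e in *. lra. }
  assert (hx0i : 2 < x0 < 6).
  { unfold e in hm. split.
    - destruct (Req_dec x0 2) as [->|]. lra. lra.
    - destruct (Req_dec x0 6) as [->|]. lra. lra. }
  assert (hdx0 : DA x0 - DB x0 = 0).
  { apply (max_deriv0 2 6 e x0); auto.
    apply (dw_ext _ _ (fun y => A y - B y - 0 / 2 * (y - x0) ^ 2)). intros; unfold e; field.
    replace (DA x0 - DB x0) with (DA x0 - DB x0 - 0 * (x0 - x0)) by ring.
    apply dw_comb; [apply hdA|apply hdB]; unfold in_cc; lra. }
  set (G := fun y => ct y * (DA (ct y) - DB (ct y)) - (A (ct y) - B (ct y))).
  set (UA := fun y => ct y * DA (ct y) - A (ct y)).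
  set (UB := fun y => ct y * DB (ct y) - B (ct y)).
  assert (hG : continuous G x0).
  { unfold G. apply cminus. apply cmult. apply ct_cont. apply cminus; apply cw_ext; auto; lra.
    apply cminus; apply cw_ext; auto; lra. }
  assert (hUA : continuous UA x0).
  { unfold UA. apply cminus. apply cmult. apply ct_cont. apply cw_ext; auto; lra. apply cw_ext; auto; lra. }
  assert (hUB : continuous UB x0).
  { unfold UB. apply cminus. apply cmult. apply ct_cont. apply cw_ext; auto; lra. apply cw_ext; auto; lra. }
  set (m := e x0) in *.
  destruct (cont_eps G x0 hG (m/2) ltac:(lra)) as [da [hda Hda]].
  destruct (cont_eps UA x0 hUA 1 ltac:(lra)) as [db [hdb Hdb]].
  destruct (cont_eps UB x0 hUB 1 ltac:(lra)) as [dc [hdc Hdc]].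
  assert (hGx0 : G x0 = - m). { unfold G, m, e. rewrite ct_id by lra. replace (DA x0) with (DB x0) by lra. ring. }
  set (d0 := Rmin (Rmin da db) (Rmin dc (6 - x0))).
  assert (hd0 : 0 < d0) by (unfold d0; repeat apply Rmin_glb_lt; lra).
  assert (hd0a : d0 <= da /\ d0 <= db /\ d0 <= dc /\ d0 <= 6 - x0).
  { unfold d0. pose proof (Rmin_l (Rmin da db) (Rmin dc (6 - x0))). pose proof (Rmin_r (Rmin da db) (Rmin dc (6 - x0))).
    pose proof (Rmin_l da db). pose proof (Rmin_r da db). pose proof (Rmin_l dc (6 - x0)). pose proof (Rmin_r dc (6 - x0)). lra. }
  set (K1 := Rabs (UA x0) + 1). set (K2 := Rabs (UB x0) + 1).
  assert (hK : 0 < 36 * (K1 + K2) + 7812). { unfold K1, K2. pose proof (Rabs_pos (UA x0)). pose proof (Rabs_pos (UB x0)). lra. }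
  set (c := m / (36 * (K1 + K2) + 7812)).
  assert (hc : 0 < c) by (unfold c; apply Rdiv_lt_0_compat; lra).
  set (y1 := x0 + d0 / 2).
  assert (S1 : forall y, x0 <= y <= y1 -> DA x0 - DB x0 - c * x0 <= DA y - DB y - c * y).
  { intros y hy. apply (L1 x0 y (fun z => DA z - DB z - c * z) (fun z => NA z \/ NB z)). lra.
    apply null_union; auto.
    apply acN_of_ac. apply (ac_comb 2 6); auto; unfold y1 in *; lra.
    intros z hz hN. apply not_or_and in hN. destruct hN as [hNA hNB].
    assert (hz26 : 2 < z < 6) by (unfold y1 in *; lra).
    destruct (hwA z hz26 hNA) as [wA [hdwA [hwA0 eqA]]].
    destruct (hwB z hz26 hNB) as [wB [hdwB [hwB0 eqB]]].
    exists (wA - wB - c). split.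
    - assert (hzx : Rabs (z - x0) < d0) by (apply abs_lt_i; unfold y1 in *; lra).
      specialize (Hda z ltac:(lra)). specialize (Hdb z ltac:(lra)). specialize (Hdc z ltac:(lra)).
      unfold G, UA, UB in Hda, Hdb, Hdc. rewrite (ct_id z) in Hda, Hdb, Hdc by lra.
      fold (G x0) in Hda. fold (UA x0) in Hdb. fold (UB x0) in Hdc. rewrite hGx0 in Hda.
      apply abs_lt_b in Hda.
      assert (hk : c <= wA - wB).
      { apply (key z wA wB (z * DA z - A z) (z * DB z - B z) (q z) m K1 K2); auto.
        lra. apply q_bounds; lra. lra.
        unfold K1. apply abs_le_i. apply abs_lt_b in Hdb. pose proof (abs_ge_self (UA x0)). lra.
        unfold K2. apply abs_le_i. apply abs_lt_b in Hdc. pose proof (abs_ge_self (UB x0)). lra. }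
      lra.
    - apply dpl_dw. apply dpl_comb; auto. }
  assert (S2 : A x0 - B x0 - c / 2 * (x0 - x0) ^ 2 <= A y1 - B y1 - c / 2 * (y1 - x0) ^ 2).
  { apply (L1 x0 y1 (fun z => A z - B z - c / 2 * (z - x0) ^ 2) (fun _ => False)).
    unfold y1; lra.
    intros eps he. exists (fun _ => 0), (fun _ => 0). split. intros; lra. split. intros; contradiction.
    induction n; simpl; lra.
    apply acN_empty.
    intros z hz _. exists (DA z - DB z - c * (z - x0)). split.
    - specialize (S1 z hz). lra.
    - apply (dw_sub 2 6). lra. unfold y1 in *; lra. apply dw_comb; [apply hdA|apply hdB]; unfold in_cc, y1 in *; lra. }
  specialize (hmax' y1 ltac:(unfold y1; lra)). unfold e, m in *.
  assert (0 < c / 2 * (y1 - x0) ^ 2). { unfold y1. replace (x0 + d0 / 2 - x0) with (d0/2) by ring.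
    apply Rmult_lt_0_compat. lra. apply pow_lt. lra. }
  replace ((x0 - x0) ^ 2) with 0 in S2 by ring. unfold e in hmax'. lra.
Qed.

Theorem mainTheorem5 :
  exists Vlo Vhi : R -> R,
    convex_solution_in Vlo /\ convex_solution_in Vhi /\
    forall V, convex_solution_in V ->
      forall x, in_cc 2 6 x -> Vlo x <= V x /\ V x <= Vhi x.
Proof.
  exists Vs, Vs. split; [apply Vs_csol|split; [apply Vs_csol|]].
  intros V hV x hx. unfold in_cc in hx. destruct (good_conv V hV) as [Dv [N [hg [h2 h6]]]].
  split.
  - apply (compare Vs Ds EE V Dv N good_Vs hg); auto. rewrite Vs2; auto. rewrite Vs6; auto.
  - apply (compare V Dv N Vs Ds EE hg good_Vs); auto. rewrite Vs2; auto. rewrite Vs6; auto.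
Qed.
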